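(* Let $\mu,\mu',\nu$ be subdistributions over closed nondeterministic expressions and $\alpha$ an action such that $\nu\approx\mu$ and $\mu\xRightarrow{\hat\alpha}\mu'$, where this weak transition is convergent (i.e. $|\mu|=|\mu'|$). Then there exists $\nu'$ such that $\nu\xRightarrow{\hat\alpha}\nu'$ and $\nu'\approx\mu'$.
   Context: Fix a set $\mathsf{Act}$ of actions containing $\tau$. Nondeterministic expressions: $E ::= 0 \mid X \mid \alpha.P \mid \mathrm{rec}\,X.E \mid E + E$; probabilistic expressions: $P ::= \partial(E) \mid P \oplus_p P$ ($0<p<1$); closed means no free variables. Subdistributions $\mu$ over $S$: $\mu:S\to\mathbb R_{\ge0}$, $|\mu|=\sum\mu(s)\le1$; $\delta_s$ Dirac. Semantics: least relations with $\partial(E)\mapsto\delta_E$; $P\oplus_pQ\mapsto p\mu+(1-p)\nu$ if $P\mapsto\mu,Q\mapsto\nu$; $\alpha.P\xrightarrow{\alpha}\mu$ if $P\mapsto\mu$; $\mathrm{rec}\,X.E\xrightarrow{\alpha}\mu$ if $E[\mathrm{rec}\,X.E/X]\xrightarrow{\alpha}\mu$; $E+F\xrightarrow{\alpha}\mu$ and $F+E\xrightarrow{\alpha}\mu$ if $E\xrightarrow{\alpha}\mu$. Combined transitions on subdistributions: least relation with $\delta_E\xrightarrow{\alpha}\mu$ if $E\xrightarrow{\alpha}\mu$, closed under $\sum p_i\nu_i\xrightarrow{\alpha}\sum p_i\mu_i$ ($\nu_i\xrightarrow{\alpha}\mu_i$, $p_i\ge0$, $\sum p_i\le1$). A derivation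 is $(\mu_i^{\to},\mu_i^{\times})_{i\in\mathbb N}$ with $\mu_i^{\to}\xrightarrow{\tau}\mu^{\to}_{i+1}+\mu^{\times}_{i+1}$; $\mu\Rightarrow\nu$ iff a derivation has $\mu=\mu_0^{\to}+\mu_0^{\times}$, $\nu=\sum_i\mu_i^\times$. $\mu\xRightarrow{\alpha}\nu$ iff $\mu\Rightarrow\xrightarrow{\alpha}\Rightarrow\nu$; $\xRightarrow{\hat\alpha}$ is $\Rightarrow$ for $\alpha=\tau$ and $\xRightarrow{\alpha}$ otherwise. A weak transition from $\mu$ to $\mu'$ is convergent if $|\mu|=|\mu'|$. Lifting of a relation $\mathcal R$ on expressions to subdistributions: least relation with $\delta_E\mathcal R\delta_F$ for $E\mathcal RF$, closed under $\sum p_i\mu_i\mathcal R\sum p_i\nu_i$ ($\mu_i\mathcal R\nu_i$, $p_i\ge0$, $\sum p_i\le1$). Weak bisimulation: relation $\mathcal R$ on closed expressions such that if $E\mathcal RF$ and $E\xrightarrow{\alpha}\mu$ then $F\xRightarrow{\hat\alpha}\nu$ with $\mu\mathcal R\nu$, and symmetrically; $\approx$ (weak bisimilarity, used lifted) is the union of all weak bisimulations. *)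

(* Defs.v *)
From Stdlib Require Import Reals List Classical ClassicalEpsilon.
Open Scope R_scope.
Set Implicit Arguments.

Section Calculus.
Variable Act : Type.
Variable tau : Act.

Definition prob := { p : R | 0 < p < 1 }.

Inductive nexp : Type :=
  | NNil : nexp
  | NVar : nat -> nexp
  | NPre : Act -> pexp -> nexp
  | NRec : nat -> nexp -> nexp
  | NSum : nexp -> nexp -> nexp
with pexp : Type :=
  | PDirac : nexp -> pexp
  | PChoice : pexp -> prob -> pexp -> pexp.

Fixpoint free_n (x : nat) (E : nexp) : Prop :=
  match E with
  | NNil => False
  | NVar y => x = y
  | NPre _ P => free_p x P
  | NRec y E' => x <> y /\ free_n x E'
  | NSum E1 E2 => free_n x E1 \/ free_n x E2
  end
with free_p (x : nat) (P : pexp) : Prop :=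
  match P with
  | PDirac E => free_n x E
  | PChoice P1 _ P2 => free_p x P1 \/ free_p x P2
  end.

Definition closed (E : nexp) : Prop := forall x, ~ free_n x E.

(** substitution E[G/X] (used only with G closed, so no capture) *)
Fixpoint subst_n (X : nat) (G : nexp) (E : nexp) : nexp :=
  match E with
  | NNil => NNil
  | NVar y => if Nat.eqb X y then G else NVar y
  | NPre a P => NPre a (subst_p X G P)
  | NRec y E' => if Nat.eqb X y then NRec y E' else NRec y (subst_n X G E')
  | NSum E1 E2 => NSum (subst_n X G E1) (subst_n X G E2)
  end
with subst_p (X : nat) (G : nexp) (P : pexp) : pexp :=
  match P with
  | PDirac E => PDirac (subst_n X G E)
  | PChoice P1 p P2 => PChoice (subst_p X G P1) p (subst_p X G P2)
  end.

Definition subd := nexp -> R.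

Definition delta (E : nexp) : subd :=
  fun s => if excluded_middle_informative (s = E) then 1 else 0.

Definition lsum (mu : subd) (l : list nexp) : R :=
  fold_right (fun s acc => mu s + acc) 0 l.

Definition subdist (mu : subd) : Prop :=
  (forall s, 0 <= mu s) /\ (forall l, NoDup l -> lsum mu l <= 1).

Definition closed_supp (mu : subd) : Prop :=
  forall s, mu s <> 0 -> closed s.

Definition mass_is (mu : subd) (r : R) : Prop :=
  is_lub (fun x => exists l, NoDup l /\ x = lsum mu l) r.

Definition same_mass (mu nu : subd) : Prop :=
  exists r, mass_is mu r /\ mass_is nu r.

Definition weights (p : nat -> R) : Prop :=
  (forall i, 0 <= p i) /\ (forall n, sum_f_R0 p n <= 1).

Definition is_wsum (p : nat -> R) (mus : nat -> subd) (mu : subd) : Prop :=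
  forall s, infinite_sum (fun i => p i * mus i s) (mu s).

Inductive pstep : pexp -> subd -> Prop :=
  | pstep_dirac : forall E, pstep (PDirac E) (delta E)
  | pstep_choice : forall P Q (p : prob) mu nu,
      pstep P mu -> pstep Q nu ->
      pstep (PChoice P p Q) (fun s => proj1_sig p * mu s + (1 - proj1_sig p) * nu s).

Inductive nstep : nexp -> Act -> subd -> Prop :=
  | nstep_pre : forall a P mu, pstep P mu -> nstep (NPre a P) a mu
  | nstep_rec : forall X E a mu,
      nstep (subst_n X (NRec X E) E) a mu -> nstep (NRec X E) a mu
  | nstep_suml : forall E F a mu, nstep E a mu -> nstep (NSum E F) a mu
  | nstep_sumr : forall E F a mu, nstep E a mu -> nstep (NSum F E) a mu.

(** Combined transitions on subdistributions.  A countable family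
    sum_i p_i nu_i (finite families are padded with weight 0 entries,
    which contribute nothing). *)
Inductive cstep : subd -> Act -> subd -> Prop :=
  | cstep_base : forall E a mu, nstep E a mu -> cstep (delta E) a mu
  | cstep_comb : forall a (p : nat -> R) (nus mus : nat -> subd) nu mu,
      weights p ->
      (forall i, p i = 0 \/ cstep (nus i) a (mus i)) ->
      is_wsum p nus nu -> is_wsum p mus mu ->
      cstep nu a mu.

Definition weak_tau (mu nu : subd) : Prop :=
  exists (mto mx : nat -> subd),
    (forall i, subdist (mto i) /\ subdist (mx i)) /\
    (forall i, cstep (mto i) tau (fun s => mto (S i) s + mx (S i) s)) /\
    mu = (fun s => mto 0%nat s + mx 0%nat s) /\
    (forall s, infinite_sum (fun i => mx i s) (nu s)).

Definition weak_act (mu : subd) (a : Act) (nu : subd) : Prop :=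
  exists mu1 mu2, subdist mu1 /\ subdist mu2 /\
    weak_tau mu mu1 /\ cstep mu1 a mu2 /\ weak_tau mu2 nu.

Definition weak_hat (mu : subd) (a : Act) (nu : subd) : Prop :=
  (a = tau -> weak_tau mu nu) /\ (a <> tau -> weak_act mu a nu).

Inductive lift (Rel : nexp -> nexp -> Prop) : subd -> subd -> Prop :=
  | lift_base : forall E F, Rel E F -> lift Rel (delta E) (delta F)
  | lift_comb : forall (p : nat -> R) (mus nus : nat -> subd) mu nu,
      weights p ->
      (forall i, p i = 0 \/ lift Rel (mus i) (nus i)) ->
      is_wsum p mus mu -> is_wsum p nus nu ->
      lift Rel mu nu.

Definition weak_bisimulation (Rel : nexp -> nexp -> Prop) : Prop :=
  (forall E F, Rel E F -> closed E /\ closed F) /\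
  (forall E F a mu, Rel E F -> nstep E a mu ->
     exists nu, weak_hat (delta F) a nu /\ lift Rel mu nu) /\
  (forall E F a nu, Rel E F -> nstep F a nu ->
     exists mu, weak_hat (delta E) a mu /\ lift Rel mu nu).

Definition wbisim (E F : nexp) : Prop :=
  exists Rel, weak_bisimulation Rel /\ Rel E F.

End Calculus.

Arguments NNil {Act}.

(* Main.v *)
Require Import Defs.
From Stdlib Require Import Reals.
From Stdlib Require Import Lra Lia List Classical ClassicalEpsilon FunctionalExtensionality.
From Stdlib Require Cantor.
Open Scope R_scope.

Definition gsum {T} (g : T -> R) (l : list T) : R := fold_right (fun x acc => g x + acc) 0 l.
Definition tsum {T} (g : T -> R) (S : R) : Prop :=
  is_lub (fun x => exists l, NoDup l /\ x = gsum g l) S.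
Definition nn {T} (g : T -> R) := forall x, 0 <= g x.
Definition bnd {T} (g : T -> R) (M : R) := forall l, NoDup l -> gsum g l <= M.

Lemma gsum_nil {T} (g : T -> R) : gsum g nil = 0. Proof. reflexivity. Qed.
Lemma gsum_cons {T} (g : T -> R) x l : gsum g (x :: l) = g x + gsum g l. Proof. reflexivity. Qed.
Lemma gsum_app {T} (g : T -> R) l1 l2 : gsum g (l1 ++ l2) = gsum g l1 + gsum g l2.
Proof. induction l1; simpl; [lra|]. unfold gsum in *; simpl. rewrite IHl1. lra. Qed.
Lemma gsum_nn {T} (g : T -> R) l : nn g -> 0 <= gsum g l.
Proof. intros H; induction l; simpl; [lra|]. unfold gsum in *; simpl. specialize (H a). lra. Qed.
Lemma gsum_ext {T} (g h : T -> R) l : (forall x, In x l -> g x = h x) -> gsum g l = gsum h l.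
Proof. induction l; simpl; intros H; auto. unfold gsum in *; simpl. rewrite H by auto. rewrite IHl; auto. Qed.
Lemma gsum_le {T} (g h : T -> R) l : (forall x, In x l -> g x <= h x) -> gsum g l <= gsum h l.
Proof. induction l; simpl; intros H; [lra|]. unfold gsum in *; simpl.
  assert (g a <= h a) by auto. assert (fold_right (fun x acc => g x + acc) 0 l <= fold_right (fun x acc => h x + acc) 0 l) by auto. lra. Qed.
Lemma gsum_plus {T} (g h : T -> R) l : gsum (fun x => g x + h x) l = gsum g l + gsum h l.
Proof. induction l; simpl; [lra|]. unfold gsum in *; simpl. rewrite IHl. lra. Qed.
Lemma gsum_scal {T} (g : T -> R) c l : gsum (fun x => c * g x) l = c * gsum g l.
Proof. induction l; simpl; [lra|]. unfold gsum in *; simpl. rewrite IHl. lra. Qed.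
Lemma gsum_zero {T} l : gsum (fun _ : T => 0) l = 0.
Proof. induction l; simpl; [lra|]. unfold gsum in *; simpl. rewrite IHl. lra. Qed.
Lemma gsum_map {T U} (g : T -> R) (f : U -> T) l : gsum g (map f l) = gsum (fun u => g (f u)) l.
Proof. induction l; simpl; [lra|]. unfold gsum in *; simpl. rewrite IHl. lra. Qed.

Lemma gsum_sub {T} (g : T -> R) l' l : nn g -> NoDup l' ->
  (forall y, In y l' -> g y <> 0 -> In y l) -> gsum g l' <= gsum g l.
Proof.
  intros Hn Hl'. revert l. induction Hl' as [|y l'' Hy Hl'' IH]; intros l H.
  - simpl. apply gsum_nn; auto.
  - rewrite gsum_cons. destruct (Req_dec (g y) 0) as [E|E].
    + rewrite E. assert (gsum g l'' <= gsum g l). { apply IH. intros z Hz Hgz. apply H; simpl; auto. } lra.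
    + assert (Hin : In y l) by (apply H; simpl; auto).
      destruct (in_split _ _ Hin) as [A [B ->]].
      rewrite gsum_app, gsum_cons.
      assert (gsum g l'' <= gsum g (A ++ B)).
      { apply IH. intros z Hz Hgz. assert (In z (A ++ y :: B)) by (apply H; simpl; auto).
        apply in_app_or in H0. apply in_or_app. destruct H0 as [H0|H0]; auto. simpl in H0. destruct H0; auto.
        subst; contradiction. }
      rewrite gsum_app in H0. lra.
Qed.

Lemma gsum_incl {T} (g : T -> R) l' l : nn g -> NoDup l' -> incl l' l -> gsum g l' <= gsum g l.
Proof. intros. apply gsum_sub; auto. Qed.

Lemma exists_nodup {T} (l : list T) : exists l', NoDup l' /\ (forall x, In x l <-> In x l').
Proof.
  induction l as [|a l IH].
  - exists nil. split; [constructor|]. simpl; tauto.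
  - destruct IH as [l' [H1 H2]]. destruct (classic (In a l')) as [Ha|Ha].
    + exists l'. split; auto. intros x; simpl. rewrite H2. split; [intros [->|]|]; auto.
    + exists (a :: l'). split; [constructor; auto|]. intros x; simpl. rewrite H2. tauto.
Qed.

Lemma tsum_ub {T} (g : T -> R) S l : tsum g S -> NoDup l -> gsum g l <= S.
Proof. intros [H _] Hl. apply H. eauto. Qed.
Lemma tsum_least {T} (g : T -> R) S B : tsum g S -> (forall l, NoDup l -> gsum g l <= B) -> S <= B.
Proof. intros [_ H] HB. apply H. intros x [l [Hl ->]]. auto. Qed.
Lemma tsum_intro {T} (g : T -> R) S : (forall l, NoDup l -> gsum g l <= S) ->
  (forall B, (forall l, NoDup l -> gsum g l <= B) -> S <= B) -> tsum g S.
Proof. intros H1 H2. split. intros x [l [Hl ->]]; auto. intros B HB. apply H2. intros l Hl. apply HB; eauto. Qed.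
Lemma tsum_unique {T} (g : T -> R) S1 S2 : tsum g S1 -> tsum g S2 -> S1 = S2.
Proof. intros H1 H2. apply Rle_antisym; [apply (tsum_least g S1 S2)|apply (tsum_least g S2 S1)]; auto;
  intros; eapply tsum_ub; eauto. Qed.
Lemma tsum_approx {T} (g : T -> R) S eps : tsum g S -> eps > 0 -> exists l, NoDup l /\ S - eps < gsum g l.
Proof. intros H He. apply NNPP. intros Hn.
  assert (S <= S - eps). { apply (tsum_least g); auto. intros l Hl. apply Rnot_lt_le. intros Hc. apply Hn. eauto. }
  lra. Qed.
Lemma tsum_exists {T} (g : T -> R) M : bnd g M -> exists S, tsum g S /\ S <= M.
Proof. intros H.
  destruct (completeness (fun x => exists l, NoDup l /\ x = gsum g l)) as [S HS].
  - exists M. intros x [l [Hl ->]]. auto.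
  - exists 0. exists nil. split; [constructor|reflexivity].
  - exists S. split; auto. apply HS. intros x [l [Hl ->]]. auto.
Qed.
Lemma tsum_nn {T} (g : T -> R) S : tsum g S -> 0 <= S.
Proof. intros H. change 0 with (gsum g nil). apply tsum_ub; auto. constructor. Qed.
Lemma tsum_bnd {T} (g : T -> R) S : tsum g S -> bnd g S.
Proof. intros H l Hl. eapply tsum_ub; eauto. Qed.
Lemma tsum_le {T} (g h : T -> R) S1 S2 : (forall x, g x <= h x) -> nn g -> tsum g S1 -> tsum h S2 -> S1 <= S2.
Proof. intros Hgh Hg H1 H2. apply (tsum_least g); auto. intros l Hl.
  apply Rle_trans with (gsum h l). apply gsum_le; auto. eapply tsum_ub; eauto. Qed.
Lemma tsum_le_ex {T} (g h : T -> R) S2 : (forall x, g x <= h x) -> nn g -> tsum h S2 -> exists S1, tsum g S1 /\ S1 <= S2.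
Proof. intros Hgh Hg H2. apply tsum_exists. intros l Hl.
  apply Rle_trans with (gsum h l). apply gsum_le; auto. eapply tsum_ub; eauto. Qed.
Lemma tsum_ext {T} (g h : T -> R) S : (forall x, g x = h x) -> tsum g S -> tsum h S.
Proof. intros E H. replace h with g; auto. apply functional_extensionality; auto. Qed.
Lemma tsum_zero {T} : tsum (fun _ : T => 0) 0.
Proof. apply tsum_intro. intros; rewrite gsum_zero; lra. intros B HB. specialize (HB nil (NoDup_nil _)). simpl in HB. auto. Qed.
Lemma tsum_zero_inv {T} (g : T -> R) x : nn g -> tsum g 0 -> g x = 0.
Proof. intros Hn H. assert (gsum g (x :: nil) <= 0) by (apply (tsum_ub g); auto; repeat constructor; auto).
  simpl in H0. specialize (Hn x). unfold gsum in H0; simpl in H0. lra. Qed.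
Lemma tsum_elem_le {T} (g : T -> R) S x : tsum g S -> g x <= S.
Proof. intros H. assert (gsum g (x :: nil) <= S) by (apply (tsum_ub g); auto; repeat constructor; auto).
  unfold gsum in H0; simpl in H0. lra. Qed.

Lemma gsum_union {T} (g : T -> R) l1 l2 : nn g -> NoDup l1 -> NoDup l2 -> exists L, NoDup L /\
  gsum g l1 <= gsum g L /\ gsum g l2 <= gsum g L /\ (forall x, In x L -> In x l1 \/ In x l2).
Proof. intros Hn H1 H2. destruct (exists_nodup (l1 ++ l2)) as [L [HL HL2]].
  exists L. split; auto. split; [|split].
  - apply gsum_incl; auto. intros x Hx. apply HL2. apply in_or_app; auto.
  - apply gsum_incl; auto. intros x Hx. apply HL2. apply in_or_app; auto.
  - intros x Hx. apply HL2 in Hx. apply in_app_or; auto.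
Qed.

Lemma tsum_plus {T} (g h : T -> R) S1 S2 : nn g -> nn h -> tsum g S1 -> tsum h S2 -> tsum (fun x => g x + h x) (S1 + S2).
Proof. intros Hg Hh H1 H2. apply tsum_intro.
  - intros l Hl. rewrite gsum_plus. pose proof (tsum_ub g S1 l H1 Hl). pose proof (tsum_ub h S2 l H2 Hl). lra.
  - intros B HB. apply Rnot_lt_le; intros Hc. set (e := (S1 + S2 - B) / 3).
    assert (e > 0) by (unfold e; lra).
    destruct (tsum_approx g S1 e H1 H) as [l1 [Hl1 A1]]. destruct (tsum_approx h S2 e H2 H) as [l2 [Hl2 A2]].
    destruct (exists_nodup (l1 ++ l2)) as [L [HL HL2]].
    assert (gsum g l1 <= gsum g L). { apply gsum_incl; auto. intros x Hx. apply HL2. apply in_or_app; auto. }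
    assert (gsum h l2 <= gsum h L). { apply gsum_incl; auto. intros x Hx. apply HL2. apply in_or_app; auto. }
    specialize (HB L HL). rewrite gsum_plus in HB. unfold e in *. lra.
Qed.

Lemma tsum_scal {T} (g : T -> R) c S : 0 <= c -> tsum g S -> tsum (fun x => c * g x) (c * S).
Proof. intros Hc H. destruct (Req_dec c 0) as [->|Hc0].
  - rewrite Rmult_0_l. apply tsum_ext with (fun _ => 0). intros; lra. apply tsum_zero.
  - apply tsum_intro.
    + intros l Hl. rewrite gsum_scal. apply Rmult_le_compat_l; auto. eapply tsum_ub; eauto.
    + intros B HB. assert (S <= B / c).
      { apply (tsum_least g); auto. intros l Hl. specialize (HB l Hl). rewrite gsum_scal in HB.
        apply Rmult_le_reg_l with c. lra. field_simplify; lra. }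
      apply Rmult_le_compat_l with (r := c) in H0; auto. field_simplify in H0; lra.
Qed.

Lemma tsum_finite {T} (g : T -> R) l : nn g -> NoDup l -> (forall y, ~ In y l -> g y = 0) -> tsum g (gsum g l).
Proof. intros Hn Hl H. apply tsum_intro.
  - intros l' Hl'. apply gsum_sub; auto. intros y Hy Hgy. apply NNPP. intros Hc. apply Hgy; auto.
  - intros B HB. apply HB; auto.
Qed.

Lemma tsum_single {T} (g : T -> R) x : nn g -> (forall y, y <> x -> g y = 0) -> tsum g (g x).
Proof. intros Hn H. replace (g x) with (gsum g (x :: nil)) by (unfold gsum; simpl; lra).
  apply tsum_finite; auto. repeat constructor; auto. intros y Hy. apply H. intros ->. apply Hy; simpl; auto. Qed.

Definition tval {T} (g : T -> R) : R :=
  match excluded_middle_informative (exists S, tsum g S) with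
  | left H => proj1_sig (constructive_indefinite_description _ H)
  | right _ => 0 end.
Lemma tval_spec {T} (g : T -> R) : (exists S, tsum g S) -> tsum g (tval g).
Proof. intros H. unfold tval. destruct excluded_middle_informative as [H'|H']; [|contradiction].
  destruct constructive_indefinite_description; auto. Qed.
Lemma tval_eq {T} (g : T -> R) S : tsum g S -> tval g = S.
Proof. intros H. eapply tsum_unique. apply tval_spec; eauto. auto. Qed.

Lemma le_eps (x y : R) : (forall e, e > 0 -> x <= y + e) -> x <= y.
Proof. intros H. apply Rnot_lt_le. intros Hc. specialize (H ((x - y)/2) ltac:(lra)). lra. Qed.
Lemma tsum_scal1 {T} (g : T -> R) a : 0 <= a -> tsum g 1 -> tsum (fun x => a * g x) a.
Proof. intros Ha H. pose proof (tsum_scal g a 1 Ha H). rewrite Rmult_1_r in H0. exact H0. Qed.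
Lemma tsum_single_v {T} (g : T -> R) x v : nn g -> (forall y, y <> x -> g y = 0) -> g x = v -> tsum g v.
Proof. intros H1 H2 <-. apply tsum_single; auto. Qed.

Lemma nodup_map_inj {U T} (f : U -> T) l : (forall a b, f a = f b -> a = b) -> NoDup l -> NoDup (map f l).
Proof. intros Hi Hl. induction Hl; simpl; constructor; auto.
  intros Hc. apply in_map_iff in Hc. destruct Hc as [y [E Hy]]. apply Hi in E. subst; auto. Qed.

Lemma preimage_list {U T} (f : U -> T) (g : T -> R) lt : nn g -> NoDup lt ->
  (forall a b, f a = f b -> a = b) -> (forall t, g t <> 0 -> exists u, f u = t) ->
  exists lu, NoDup lu /\ gsum g lt <= gsum (fun u => g (f u)) lu /\ (forall u, In u lu -> In (f u) lt).
Proof. intros Hn Hl Hi Hs. induction Hl as [|t lt Ht Hl IH].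
  - exists nil. simpl. split; [constructor|]. split; [lra|tauto].
  - destruct IH as [lu [H1 [H2 H3]]]. destruct (Req_dec (g t) 0) as [E|E].
    + exists lu. split; auto. rewrite gsum_cons, E. split; [lra|]. intros u Hu; simpl; auto.
    + destruct (Hs t E) as [u Hu]. exists (u :: lu). split.
      * constructor; auto. intros Hc. apply H3 in Hc. rewrite Hu in Hc. contradiction.
      * rewrite !gsum_cons. rewrite Hu. split; [lra|]. intros v [<-|Hv]; simpl; auto.
Qed.

Lemma tsum_inj {U T} (f : U -> T) (g : T -> R) S : nn g ->
  (forall a b, f a = f b -> a = b) -> (forall t, g t <> 0 -> exists u, f u = t) ->
  (tsum (fun u => g (f u)) S <-> tsum g S).
Proof. intros Hn Hi Hs.
  assert (A : forall B, bnd g B -> bnd (fun u => g (f u)) B).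
  { intros B HB lu Hlu. rewrite <- gsum_map. apply HB. apply nodup_map_inj; auto. }
  assert (C : forall B, bnd (fun u => g (f u)) B -> bnd g B).
  { intros B HB lt Hlt. destruct (preimage_list f g lt Hn Hlt Hi Hs) as [lu [H1 [H2 _]]].
    specialize (HB lu H1). lra. }
  split; intros H; apply tsum_intro.
  - apply C. apply tsum_bnd; auto.
  - intros B HB. apply (tsum_least _ S B H). apply A. exact HB.
  - apply A. apply tsum_bnd; auto.
  - intros B HB. apply (tsum_least _ S B H). apply C. exact HB.
Qed.

Section Fub.
Context {T U : Type} (g : T -> U -> R) (Hg : forall t u, 0 <= g t u).
Definition unc (p : T * U) := g (fst p) (snd p).

Lemma nodup_prod (lt : list T) (lu : list U) : NoDup lt -> NoDup lu -> NoDup (list_prod lt lu).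
Proof. intros Ht Hu. induction Ht as [|t lt Ht' Hl IH]; simpl; [constructor|].
  apply NoDup_app; auto. apply nodup_map_inj; auto. intros a b E; inversion E; auto.
  intros [a b] H1 H2. apply in_map_iff in H1. destruct H1 as [x [E _]]. inversion E; subst.
  apply in_prod_iff in H2. tauto. Qed.

Lemma gsum_prod lt lu : gsum unc (list_prod lt lu) = gsum (fun t => gsum (g t) lu) lt.
Proof. induction lt; [reflexivity|]. change (list_prod (a::lt) lu) with (map (fun y => (a,y)) lu ++ list_prod lt lu).
  rewrite gsum_app, gsum_map, gsum_cons, IHlt. reflexivity. Qed.

Lemma unc_nn : nn unc. Proof. intros [a b]; apply Hg. Qed.

Lemma fub_upper (h : T -> R) S L : (forall t, tsum (g t) (h t)) -> (forall lt, NoDup lt -> gsum h lt <= S) -> NoDup L -> gsum unc L <= S.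
Proof. intros Hh HS HL.
  destruct (exists_nodup (map fst L)) as [lt [Hlt Elt]]. destruct (exists_nodup (map snd L)) as [lu [Hlu Elu]].
  apply Rle_trans with (gsum unc (list_prod lt lu)).
  { apply gsum_incl; auto. apply unc_nn. intros [a b] Hp. apply in_prod. apply Elt. apply in_map_iff. exists (a,b); auto.
    apply Elu. apply in_map_iff. exists (a,b); auto. }
  rewrite gsum_prod. apply Rle_trans with (gsum h lt); auto.
  apply gsum_le. intros t _. eapply tsum_ub; eauto.
Qed.

Lemma fub_lower (h : T -> R) lt eps : (forall t, tsum (g t) (h t)) -> NoDup lt -> eps > 0 ->
  exists L, NoDup L /\ (forall p, In p L -> In (fst p) lt) /\ gsum h lt - eps < gsum unc L.
Proof. intros Hh Hlt. revert eps. induction Hlt as [|t lt Ht Hl IH]; intros eps He.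
  - exists nil. simpl. split; [constructor|]. split; [tauto|lra].
  - destruct (IH (eps/2)) as [L [H1 [H2 H3]]]. lra.
    destruct (tsum_approx (g t) (h t) (eps/2) (Hh t)) as [lu [Hlu A]]. lra.
    exists (map (pair t) lu ++ L). split; [|split].
    + apply NoDup_app; auto. apply nodup_map_inj; auto. intros a b E; inversion E; auto.
      intros p Hp Hp2. apply in_map_iff in Hp. destruct Hp as [u [<- _]]. apply H2 in Hp2. simpl in Hp2. contradiction.
    + intros p Hp. apply in_app_or in Hp. destruct Hp as [Hp|Hp].
      * apply in_map_iff in Hp. destruct Hp as [u [<- _]]. simpl; auto.
      * simpl; auto.
    + rewrite gsum_app, gsum_map, gsum_cons. change (gsum (fun u => unc (t, u)) lu) with (gsum (g t) lu). lra.
Qed.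

Lemma fubA (h : T -> R) S : (forall t, tsum (g t) (h t)) -> tsum h S -> tsum unc S.
Proof. intros Hh HS. apply tsum_intro.
  - intros L HL. apply (fub_upper h); auto. intros; eapply tsum_ub; eauto.
  - intros B HB. apply (tsum_least h S B HS). intros lt Hlt. apply Rnot_lt_le. intros Hc.
    destruct (fub_lower h lt (gsum h lt - B) Hh Hlt) as [L [H1 [_ H3]]]. lra.
    specialize (HB L H1). lra.
Qed.

Lemma fubB S : tsum unc S -> exists h, (forall t, tsum (g t) (h t)) /\ tsum h S.
Proof. intros HS.
  assert (Hex : forall t, exists x, tsum (g t) x).
  { intros t. destruct (tsum_exists (g t) S) as [x [Hx _]]; eauto.
    intros lu Hlu. replace (gsum (g t) lu) with (gsum unc (map (pair t) lu)).
    apply (tsum_ub unc); auto. apply nodup_map_inj; auto. intros a b E; inversion E; auto.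
    rewrite gsum_map. reflexivity. }
  exists (fun t => tval (g t)). assert (Hh : forall t, tsum (g t) (tval (g t))) by (intros; apply tval_spec; auto).
  split; auto.
  destruct (tsum_exists (fun t => tval (g t)) S) as [S' [HS' _]].
  { intros lt Hlt. apply le_eps. intros e He.
    destruct (fub_lower _ lt e Hh Hlt He) as [L [H1 [_ H3]]]. pose proof (tsum_ub unc S L HS H1). lra. }
  pose proof (fubA _ S' Hh HS'). rewrite (tsum_unique unc S S'); auto.
Qed.
End Fub.

Lemma fub_swap {T U} (g : T -> U -> R) (h : T -> R) S : (forall t u, 0 <= g t u) ->
  (forall t, tsum (g t) (h t)) -> tsum h S ->
  exists k, (forall u, tsum (fun t => g t u) (k u)) /\ tsum k S.
Proof. intros Hg Hh HS. pose proof (fubA g Hg h S Hh HS) as H.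
  set (g' := fun u t => g t u).
  assert (H' : tsum (unc g') S).
  { apply (tsum_inj (fun p : U * T => (snd p, fst p)) (unc g)).
    - apply unc_nn; auto.
    - intros [a b] [c d] E; inversion E; auto.
    - intros [a b] _. exists (b, a); auto.
    - apply tsum_ext with (unc g); auto. }
  destruct (fubB g' (fun u t => Hg t u) S H') as [k [Hk1 Hk2]]. exists k; auto.
Qed.

Lemma sum_gsum (f : nat -> R) n : sum_f_R0 f n = gsum f (seq 0 (S n)).
Proof. induction n. simpl. unfold gsum; simpl; lra.
  rewrite seq_S, gsum_app, <- IHn. simpl. unfold gsum; simpl. lra. Qed.

Lemma nat_list_bound (l : list nat) : exists N, forall x, In x l -> (x <= N)%nat.
Proof. induction l as [|a l [N HN]]. exists 0%nat; simpl; tauto.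
  exists (Nat.max a N). intros x [<-|Hx]. lia. specialize (HN x Hx). lia. Qed.

Lemma nat_list_incl (l : list nat) : exists N, forall n, (n >= N)%nat -> incl l (seq 0 (S n)).
Proof. destruct (nat_list_bound l) as [N HN]. exists N. intros n Hn x Hx. apply in_seq. specialize (HN x Hx). lia. Qed.

Lemma partial_mono (f : nat -> R) m n : nn f -> (m <= n)%nat -> sum_f_R0 f m <= sum_f_R0 f n.
Proof. intros Hf H. induction H. lra. simpl. specialize (Hf (S m0)). lra. Qed.

Lemma tsum_nat (f : nat -> R) Sm : nn f -> (infinite_sum f Sm <-> tsum f Sm).
Proof. intros Hf. split; intros H.
  - assert (P : forall n, sum_f_R0 f n <= Sm).
    { intros n. apply Rnot_lt_le. intros Hc. destruct (H (sum_f_R0 f n - Sm)) as [N HN]. lra.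
      specialize (HN (Nat.max n N) ltac:(lia)). pose proof (partial_mono f n (Nat.max n N) Hf ltac:(lia)).
      unfold Rdist in HN. rewrite Rabs_right in HN; lra. }
    apply tsum_intro.
    + intros l Hl. destruct (nat_list_incl l) as [N HN]. specialize (HN N (le_n _)).
      apply Rle_trans with (sum_f_R0 f N); auto. rewrite sum_gsum. apply gsum_incl; auto.
    + intros B HB. apply Rnot_lt_le. intros Hc. destruct (H (Sm - B)) as [N HN]. lra.
      specialize (HN N (le_n _)). specialize (HB (seq 0 (S N)) (seq_NoDup _ _)). rewrite <- sum_gsum in HB.
      unfold Rdist in HN. rewrite Rabs_left1 in HN; [lra|]. specialize (P N). lra.
  - intros e He. destruct (tsum_approx f Sm e H He) as [l [Hl A]]. destruct (nat_list_incl l) as [N HN].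
    exists N. intros n Hn. pose proof (gsum_incl f l _ Hf Hl (HN n Hn)). rewrite <- sum_gsum in H0.
    pose proof (tsum_ub f Sm (seq 0 (S n)) H (seq_NoDup _ _)). rewrite <- sum_gsum in H1.
    unfold Rdist. rewrite Rabs_left1; lra.
Qed.

Lemma tsum_nat_partial (f : nat -> R) B : nn f -> (forall n, sum_f_R0 f n <= B) -> exists S, tsum f S /\ S <= B.
Proof. intros Hf H. apply tsum_exists. intros l Hl. destruct (nat_list_incl l) as [N HN].
  apply Rle_trans with (sum_f_R0 f N); auto. rewrite sum_gsum. apply gsum_incl; auto. Qed.

Lemma tsum_nat_cv (f : nat -> R) Sm : nn f -> tsum f Sm -> Un_cv (sum_f_R0 f) Sm.
Proof. intros Hf H. apply (tsum_nat f Sm Hf) in H. intros e He. destruct (H e He) as [N HN]. exists N. intros n Hn. apply HN; lia. Qed.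
Lemma cv_tsum_nat (f : nat -> R) Sm : nn f -> Un_cv (sum_f_R0 f) Sm -> tsum f Sm.
Proof. intros Hf H. apply (tsum_nat f Sm Hf). intros e He. destruct (H e He) as [N HN]. exists N. intros n Hn. apply HN; lia. Qed.

Lemma unc_swap {T U} (g : T -> U -> R) S : (forall t u, 0 <= g t u) ->
  tsum (unc (fun u t => g t u)) S -> tsum (unc g) S.
Proof. intros Hg H.
  apply tsum_ext with (fun p : T*U => unc (fun u t => g t u) (snd p, fst p)). { intros [a b]; reflexivity. }
  apply (tsum_inj (fun p : T * U => (snd p, fst p)) (unc (fun u t => g t u))); auto.
  - intros [a b]; apply Hg.
  - intros [a b] [c d] E; inversion E; auto.
  - intros [a b] _. exists (b, a); auto. Qed.

Lemma fubA_swap {T U} (g : T -> U -> R) (h : U -> R) S : (forall t u, 0 <= g t u) ->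
  (forall u, tsum (fun t => g t u) (h u)) -> tsum h S -> tsum (unc g) S.
Proof. intros Hg Hh HS. apply unc_swap; auto. apply (fubA (fun u t => g t u) (fun u t => Hg t u) h); auto. Qed.

Lemma cauchy (F : nat -> nat -> R) Sm : (forall u t, 0 <= F u t) -> tsum (unc F) Sm ->
  tsum (fun w => gsum (fun u => F u (w - u)%nat) (seq 0 (S w))) Sm.
Proof. intros HF H.
  set (G := fun u w => if Compare_dec.le_dec u w then F u (w - u)%nat else 0).
  assert (HG : forall u w, 0 <= G u w). { intros; unfold G; destruct Compare_dec.le_dec; [apply HF|lra]. }
  assert (H1 : tsum (unc G) Sm).
  { apply (tsum_inj (fun p : nat * nat => (fst p, fst p + snd p)%nat) (unc G)).
    - intros [a b]; apply HG.
    - intros [a b] [c d] E; inversion E; f_equal; lia.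
    - intros [u w] Hz. unfold unc, G in Hz; simpl in Hz. destruct Compare_dec.le_dec; [|lra]. exists (u, (w - u)%nat). simpl. f_equal; lia.
    - apply tsum_ext with (unc F); auto. intros [a b]. unfold unc, G; simpl. destruct Compare_dec.le_dec; [|lia]. f_equal; lia. }
  assert (H2 : tsum (unc (fun w u => G u w)) Sm).
  { apply (tsum_inj (fun p : nat * nat => (snd p, fst p)) (unc G)); auto.
    - intros [a b]; apply HG.
    - intros [a b] [c d] E; inversion E; auto.
    - intros [a b] _. exists (b, a); auto. }
  destruct (fubB (fun w u => G u w) (fun w u => HG u w) Sm H2) as [k [Hk1 Hk2]].
  apply tsum_ext with k; auto. intros w. symmetry. apply (tsum_unique (fun u => G u w)); auto.
  replace (gsum (fun u => F u (w - u)%nat) (seq 0 (S w))) with (gsum (fun u => G u w) (seq 0 (S w))).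
  - apply tsum_finite. intros u; apply HG. apply seq_NoDup. intros y Hy. unfold G. destruct Compare_dec.le_dec; auto.
    exfalso; apply Hy. apply in_seq. lia.
  - apply gsum_ext. intros u Hu. apply in_seq in Hu. unfold G. destruct Compare_dec.le_dec; auto. lia.
Qed.

Lemma mass_swap {I T} (g : I -> T -> R) (c : I -> R) (f : T -> R) m :
  (forall k s, 0 <= g k s) -> (forall k, tsum (g k) (c k)) -> (forall s, tsum (fun k => g k s) (f s)) ->
  (tsum c m <-> tsum f m).
Proof. intros Hg Hc Hf. split; intros H.
  - destruct (fub_swap g c m Hg Hc H) as [k [Hk1 Hk2]].
    apply tsum_ext with k; auto. intros s. eapply tsum_unique; eauto.
  - pose proof (fubA_swap g f m Hg Hf H) as H1. destruct (fubB g Hg m H1) as [h [Hh1 Hh2]].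
    apply tsum_ext with h; auto. intros k. eapply tsum_unique; eauto.
Qed.

Lemma tsum_gsum {T U} (f : T -> U -> R) (F : U -> R) l : (forall t u, 0 <= f t u) ->
  (forall u, In u l -> tsum (fun t => f t u) (F u)) -> tsum (fun t => gsum (f t) l) (gsum F l).
Proof. intros Hf H. induction l as [|u l IH].
  - apply tsum_ext with (fun _ => 0). intros; reflexivity. apply tsum_zero.
  - rewrite gsum_cons. apply tsum_ext with (fun t => f t u + gsum (f t) l). intros; reflexivity.
    apply tsum_plus. intros t; apply Hf. intros t; apply gsum_nn. intros x; apply Hf.
    apply H; simpl; auto. apply IH. intros; apply H; simpl; auto.
Qed.

Lemma tsum_le_nat_partial (f : nat -> R) Sm : nn f -> tsum f Sm -> forall n, sum_f_R0 f n <= Sm.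
Proof. intros Hf H n. rewrite sum_gsum. apply (tsum_ub f); auto. apply seq_NoDup. Qed.

Section Model.
Context {Act : Type}.

Lemma delta_eq (E : nexp Act) : delta E E = 1.
Proof. unfold delta; destruct excluded_middle_informative; congruence. Qed.
Lemma delta_ne (E s : nexp Act) : s <> E -> delta E s = 0.
Proof. intros H; unfold delta; destruct excluded_middle_informative; congruence. Qed.
Lemma delta_nn (E : nexp Act) : nn (delta E).
Proof. intros s; unfold delta; destruct excluded_middle_informative; lra. Qed.
Lemma delta_le1 (E s : nexp Act) : delta E s <= 1.
Proof. unfold delta; destruct excluded_middle_informative; lra. Qed.
Lemma tsum_delta (E : nexp Act) : tsum (delta E) 1.
Proof. pose proof (tsum_single (delta E) E (delta_nn E) (delta_ne E)) as H. rewrite delta_eq in H. exact H. Qed.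

Lemma subdist_iff (mu : subd Act) : subdist mu <-> nn mu /\ bnd mu 1.
Proof. split; intros [H1 H2]; split; auto. Qed.
Lemma subdist_nn (mu : subd Act) : subdist mu -> nn mu.
Proof. intros H. destruct (proj1 (subdist_iff mu) H); auto. Qed.
Lemma subdist_mass (mu : subd Act) : subdist mu -> exists m, tsum mu m /\ m <= 1.
Proof. intros H; apply (proj1 (subdist_iff _)) in H. destruct H. apply tsum_exists; auto. Qed.
Lemma subdist_of_mass (mu : subd Act) m : nn mu -> tsum mu m -> m <= 1 -> subdist mu.
Proof. intros H1 H2 H3. apply (proj2 (subdist_iff _)). split; auto. intros l Hl. pose proof (tsum_ub mu m l H2 Hl). lra. Qed.
Lemma subdist_le1 (mu : subd Act) s : subdist mu -> mu s <= 1.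
Proof. intros H; apply (proj1 (subdist_iff _)) in H. destruct H as [_ H]. specialize (H (s :: nil)).
  unfold gsum in H; simpl in H. assert (NoDup (s :: nil)) by (repeat constructor; auto). specialize (H H0). lra. Qed.
Lemma subdist_dom (nu mu : subd Act) : nn nu -> (forall s, nu s <= mu s) -> subdist mu -> subdist nu.
Proof. intros H1 H2 H3. apply (proj1 (subdist_iff _)) in H3. apply (proj2 (subdist_iff _)). destruct H3 as [_ H3]. split; auto.
  intros l Hl. apply Rle_trans with (gsum mu l); auto. apply gsum_le; auto. Qed.
Lemma subdist_zero : subdist (fun _ : nexp Act => 0).
Proof. apply (proj2 (subdist_iff _)). split. intros _; lra. intros l _. rewrite gsum_zero. lra. Qed.
Lemma subdist_delta (E : nexp Act) : subdist (delta E).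
Proof. apply (subdist_of_mass _ 1). apply delta_nn. apply tsum_delta. lra. Qed.

Lemma term_nn (p : nat -> R) (nus : nat -> subd Act) i s : 0 <= p i -> (p i = 0 \/ nn (nus i)) -> 0 <= p i * nus i s.
Proof. intros H [E|E]. rewrite E; lra. apply Rmult_le_pos; auto. Qed.

Lemma wsum_tsum (p : nat -> R) (mus : nat -> subd Act) mu : (forall i s, 0 <= p i * mus i s) ->
  (is_wsum p mus mu <-> forall s, tsum (fun i => p i * mus i s) (mu s)).
Proof. intros H. unfold is_wsum. split; intros H1 s; apply tsum_nat; auto; intros i; apply H. Qed.

Lemma weights_tsum p : weights p -> exists S, tsum p S /\ S <= 1.
Proof. intros [H1 H2]. apply tsum_nat_partial; auto. Qed.

Lemma wsum_subdist (p : nat -> R) (nus : nat -> subd Act) nu : weights p -> (forall i, p i = 0 \/ subdist (nus i)) ->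
  (forall s, tsum (fun i => p i * nus i s) (nu s)) -> subdist nu.
Proof. intros Hw Hn Hs.
  assert (Hnn : forall i s, 0 <= p i * nus i s).
  { intros i s. apply term_nn. apply Hw. destruct (Hn i); auto. right; apply subdist_nn; auto. }
  destruct (weights_tsum p Hw) as [S [HS HS1]].
  apply (proj2 (subdist_iff _)). split.
  - intros s. eapply tsum_nn; eauto.
  - intros l Hl.
    assert (H : tsum (fun i => gsum (fun u => p i * nus i u) l) (gsum nu l)).
    { apply tsum_gsum; auto. }
    assert (gsum nu l <= S).
    { apply (tsum_le _ p _ _ ) with (2 := fun i => gsum_nn (fun u => p i * nus i u) l (fun x => Hnn i x)); auto.
      intros i. rewrite gsum_scal. destruct (Hn i) as [E|E]. rewrite E; lra.
      apply (proj1 (subdist_iff _)) in E. destruct E as [_ E]. specialize (E l Hl). pose proof (proj1 Hw i).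
      apply Rle_trans with (p i * 1); [|lra]. apply Rmult_le_compat_l; auto. }
    lra.
Qed.

Lemma pstep_mass (P : pexp Act) mu : pstep P mu -> nn mu /\ tsum mu 1.
Proof. induction 1.
  - split. apply delta_nn. apply tsum_delta.
  - destruct p as [p Hp]; simpl in *. destruct IHpstep1 as [A1 B1], IHpstep2 as [A2 B2].
    split. intros s. specialize (A1 s); specialize (A2 s). nra.
    assert (Hs : tsum (fun s => p * mu s + (1 - p) * nu s) (p * 1 + (1 - p) * 1)).
    { apply tsum_plus. intros s; specialize (A1 s); nra. intros s; specialize (A2 s); nra.
      apply tsum_scal; auto; lra. apply tsum_scal; auto; lra. }
    replace (p * 1 + (1 - p) * 1) with 1 in Hs by ring. exact Hs.
Qed.

Lemma nstep_mass (E : nexp Act) a mu : nstep E a mu -> nn mu /\ tsum mu 1.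
Proof. induction 1; auto. eapply pstep_mass; eauto. Qed.

Definition gnf (P : nexp Act -> subd Act -> Prop) (nu mu : subd Act) : Prop :=
  exists (c : nat -> R) (E : nat -> nexp Act) (M : nat -> subd Act),
    (forall k, 0 <= c k) /\ (forall k, c k = 0 \/ P (E k) (M k)) /\
    (forall s, tsum (fun k => c k * delta (E k) s) (nu s)) /\
    (forall s, tsum (fun k => c k * M k s) (mu s)).

Section G.
Variable P : nexp Act -> subd Act -> Prop.
Hypothesis HP : forall E M, P E M -> nn M /\ tsum M 1.

Lemma gnf_terms (c : nat -> R) (E : nat -> nexp Act) (M : nat -> subd Act) :
  (forall k, 0 <= c k) -> (forall k, c k = 0 \/ P (E k) (M k)) ->
  (forall k s, 0 <= c k * delta (E k) s) /\ (forall k s, 0 <= c k * M k s) /\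
  (forall k, tsum (fun s => c k * delta (E k) s) (c k)) /\ (forall k, tsum (fun s => c k * M k s) (c k)).
Proof. intros Hc HP2. split; [|split; [|split]].
  - intros k s. apply Rmult_le_pos; auto. apply delta_nn.
  - intros k s. destruct (HP2 k) as [Z|Z]. rewrite Z; lra. apply Rmult_le_pos; auto. apply (proj1 (HP _ _ Z)).
  - intros k. apply tsum_scal1; auto. apply tsum_delta.
  - intros k. destruct (HP2 k) as [Z|Z].
    + rewrite Z. apply tsum_ext with (fun _ => 0). intros; lra. apply tsum_zero.
    + apply tsum_scal1; auto. apply (proj2 (HP _ _ Z)).
Qed.

Lemma gnf_nn nu mu : gnf P nu mu -> nn nu /\ nn mu.
Proof. intros (c & E & M & Hc & HP2 & Hs & Ht). destruct (gnf_terms c E M Hc HP2) as (A & B & _ & _).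
  split; intros s; eapply tsum_nn; eauto. Qed.

Lemma gnf_mass nu mu : gnf P nu mu -> exists c : nat -> R, nn c /\ (forall m, tsum c m <-> tsum nu m) /\ (forall m, tsum c m <-> tsum mu m).
Proof. intros (c & E & M & Hc & HP2 & Hs & Ht). destruct (gnf_terms c E M Hc HP2) as (A & B & C & D).
  exists c. split; auto. split; intros m.
  - apply (mass_swap (fun k s => c k * delta (E k) s)); auto.
  - apply (mass_swap (fun k s => c k * M k s)); auto.
Qed.

Lemma gnf_mass_eq nu mu m : gnf P nu mu -> tsum nu m -> tsum mu m.
Proof. intros H H1. destruct (gnf_mass nu mu H) as (c & _ & A & B). apply B, A, H1. Qed.
Lemma gnf_mass_eq' nu mu m : gnf P nu mu -> tsum mu m -> tsum nu m.
Proof. intros H H1. destruct (gnf_mass nu mu H) as (c & _ & A & B). apply A, B, H1. Qed.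

Lemma gnf_subdist nu mu : gnf P nu mu -> subdist nu -> subdist mu.
Proof. intros H Hs. destruct (subdist_mass nu Hs) as [m [Hm Hm1]].
  apply subdist_of_mass with m; auto. apply (gnf_nn _ _ H). eapply gnf_mass_eq; eauto. Qed.

Lemma gnf_zero nu mu : gnf P nu mu -> (forall s, nu s = 0) -> forall s, mu s = 0.
Proof. intros H Z s. assert (tsum nu 0). { apply tsum_ext with (fun _ => 0). intros; auto. apply tsum_zero. }
  apply (tsum_zero_inv mu). apply (gnf_nn _ _ H). eapply gnf_mass_eq; eauto. Qed.

Lemma gnf_weights nu mu : gnf P nu mu -> subdist nu ->
  exists c E M, weights c /\ (forall k, c k = 0 \/ P (E k) (M k)) /\
    (forall s, tsum (fun k => c k * delta (E k) s) (nu s)) /\ (forall s, tsum (fun k => c k * M k s) (mu s)).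
Proof. intros H Hs. pose proof H as (c & E & M & Hc & HP2 & Hs1 & Ht).
  exists c, E, M. split; auto. split; auto.
  destruct (subdist_mass nu Hs) as [m [Hm Hm1]].
  destruct (gnf_terms c E M Hc HP2) as (A & B & C & D).
  assert (tsum c m) by (apply (mass_swap (fun k s => c k * delta (E k) s) c nu m); auto).
  intros n. pose proof (tsum_le_nat_partial c m Hc H0 n). lra.
Qed.

Lemma gnf_single E M : P E M -> gnf P (delta E) M.
Proof. intros H. exists (fun k => if Nat.eq_dec k 0 then 1 else 0), (fun _ => E), (fun _ => M).
  pose proof (HP E M H) as [HM _].
  split; [|split; [|split]].
  - intros k; destruct Nat.eq_dec; lra.
  - intros k; destruct Nat.eq_dec; auto.
  - intros s. apply (tsum_single_v (fun k => (if Nat.eq_dec k 0 then 1 else 0) * delta E s) 0%nat).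
    intros k; destruct Nat.eq_dec; [|lra]. pose proof (delta_nn E s); lra.
    intros k Hk; destruct Nat.eq_dec; [contradiction|lra].
    simpl. lra.
  - intros s. apply (tsum_single_v (fun k => (if Nat.eq_dec k 0 then 1 else 0) * M s) 0%nat).
    intros k; destruct Nat.eq_dec; [|lra]. pose proof (HM s); lra.
    intros k Hk; destruct Nat.eq_dec; [contradiction|lra].
    simpl. lra.
Qed.

Lemma gnf_scale a nu mu : 0 <= a -> gnf P nu mu -> gnf P (fun s => a * nu s) (fun s => a * mu s).
Proof. intros Ha (c & E & M & Hc & HP2 & Hs & Ht). exists (fun k => a * c k), E, M.
  split; [|split; [|split]].
  - intros k. apply Rmult_le_pos; auto.
  - intros k. destruct (HP2 k) as [Z|Z]; [left; rewrite Z; ring|right; auto].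
  - intros s. apply tsum_ext with (fun k => a * (c k * delta (E k) s)). intros; ring. apply tsum_scal; auto.
  - intros s. apply tsum_ext with (fun k => a * (c k * M k s)). intros; ring. apply tsum_scal; auto.
Qed.

Lemma gnf_mono (P' : nexp Act -> subd Act -> Prop) nu mu : (forall E M, P E M -> P' E M) -> gnf P nu mu -> gnf P' nu mu.
Proof. intros HPP (c & E & M & Hc & HP2 & Hs & Ht). exists c, E, M. split; [auto|split; [|split; auto]].
  intros k; destruct (HP2 k); auto. Qed.

Lemma gnf_decomp nu mu (r : nat -> nexp Act -> R) : gnf P nu mu -> (forall i s, 0 <= r i s) ->
  (forall s, tsum (fun i => r i s) 1) ->
  exists mus : nat -> subd Act, (forall i, gnf P (fun s => r i s * nu s) (mus i)) /\
     (forall s, tsum (fun i => mus i s) (mu s)).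
Proof. intros (c & E & M & Hc & HP2 & Hs & Ht) Hr Hr1.
  destruct (gnf_terms c E M Hc HP2) as (A & B & C & D).
  assert (Hr2 : forall i s, r i s <= 1) by (intros i s; apply (tsum_elem_le (fun i => r i s)); auto).
  assert (Hex : forall i s, exists x, tsum (fun k => c k * r i (E k) * M k s) x).
  { intros i s. destruct (tsum_le_ex (fun k => c k * r i (E k) * M k s) (fun k => c k * M k s) (mu s)) as [x [Hx _]]; eauto.
    - intros k. specialize (B k s). specialize (Hr2 i (E k)). specialize (Hr i (E k)). specialize (Hc k).
      replace (c k * r i (E k) * M k s) with (r i (E k) * (c k * M k s)) by ring.
      replace (c k * M k s) with (1 * (c k * M k s)) at 2 by ring. apply Rmult_le_compat_r; auto.
    - intros k. specialize (B k s). specialize (Hr i (E k)).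
      replace (c k * r i (E k) * M k s) with (r i (E k) * (c k * M k s)) by ring. apply Rmult_le_pos; auto. }
  exists (fun i s => tval (fun k => c k * r i (E k) * M k s)).
  split.
  - intros i. exists (fun k => c k * r i (E k)), E, M. split; [|split; [|split]].
    + intros k. apply Rmult_le_pos; auto.
    + intros k. destruct (HP2 k) as [Z|Z]; [left; rewrite Z; ring|right; auto].
    + intros s. apply tsum_ext with (fun k => r i s * (c k * delta (E k) s)).
      * intros k. destruct (classic (s = E k)) as [->|Hne]. ring. rewrite delta_ne; auto. ring.
      * apply tsum_scal; auto.
    + intros s. apply tval_spec. auto.
  - intros s.
    assert (Hrow : forall k, tsum (fun i => c k * r i (E k) * M k s) (c k * M k s)).
    { intros k. apply tsum_ext with (fun i => (c k * M k s) * r i (E k)). intros; ring.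
      apply tsum_scal1; auto. }
    assert (Hnn : forall i k, 0 <= c k * r i (E k) * M k s).
    { intros i k. replace (c k * r i (E k) * M k s) with (r i (E k) * (c k * M k s)) by ring. apply Rmult_le_pos; auto. }
    pose proof (fubA_swap (fun i k => c k * r i (E k) * M k s) (fun k => c k * M k s) (mu s) Hnn Hrow (Ht s)) as HH.
    destruct (fubB _ Hnn _ HH) as [h [Hh1 Hh2]].
    apply tsum_ext with h; auto. intros i. symmetry. apply tval_eq. apply Hh1.
Qed.

Lemma gnf_comb (p : nat -> R) (nus mus : nat -> subd Act) nu m :
  (forall i, 0 <= p i) -> (forall i, p i = 0 \/ gnf P (nus i) (mus i)) ->
  (forall s, tsum (fun i => p i * nus i s) (nu s)) -> tsum nu m ->
  exists mu, (forall s, tsum (fun i => p i * mus i s) (mu s)) /\ gnf P nu mu.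
Proof. intros Hp Hg Hnu Hm.
  assert (Hch : forall i, exists (d : nat -> R) (E : nat -> nexp Act) (M : nat -> subd Act),
    (forall k, 0 <= d k) /\ (forall k, d k = 0 \/ P (E k) (M k)) /\
    (forall s, tsum (fun k => d k * delta (E k) s) (p i * nus i s)) /\
    (forall s, tsum (fun k => d k * M k s) (p i * mus i s))).
  { intros i. destruct (Hg i) as [Z|G].
    - exists (fun _ => 0), (fun _ => NNil), (fun _ _ => 0). rewrite Z.
      split; [intros; lra|split; [auto|split; intros s; apply tsum_ext with (fun _ => 0); try (intros; ring); rewrite Rmult_0_l; apply tsum_zero]].
    - destruct (gnf_scale (p i) _ _ (Hp i) G) as (d & E & M & H1 & H2 & H3 & H4). exists d, E, M; auto. }
  assert (Hch2 : exists (d : nat -> nat -> R) (E : nat -> nat -> nexp Act) (M : nat -> nat -> subd Act),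
    forall i, (forall k, 0 <= d i k) /\ (forall k, d i k = 0 \/ P (E i k) (M i k)) /\
    (forall s, tsum (fun k => d i k * delta (E i k) s) (p i * nus i s)) /\
    (forall s, tsum (fun k => d i k * M i k s) (p i * mus i s))).
  { destruct (choice (fun i (x : (nat -> R) * (nat -> nexp Act) * (nat -> subd Act)) =>
      let '(d, E, M) := x in (forall k, 0 <= d k) /\ (forall k, d k = 0 \/ P (E k) (M k)) /\
    (forall s, tsum (fun k => d k * delta (E k) s) (p i * nus i s)) /\
    (forall s, tsum (fun k => d k * M k s) (p i * mus i s)))) as [f Hf].
    { intros i. destruct (Hch i) as (d & E & M & H). exists (d, E, M). exact H. }
    exists (fun i => fst (fst (f i))), (fun i => snd (fst (f i))), (fun i => snd (f i)).
    intros i. specialize (Hf i). destruct (f i) as [[d E] M]. exact Hf. }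
  destruct Hch2 as (d & E & M & HH).
  assert (Hd : forall i k, 0 <= d i k) by (intros; apply HH).
  assert (HdP : forall i k, d i k = 0 \/ P (E i k) (M i k)) by (intros; apply HH).
  destruct (gnf_terms (fun k => d (fst (Cantor.of_nat k)) (snd (Cantor.of_nat k)))
     (fun k => E (fst (Cantor.of_nat k)) (snd (Cantor.of_nat k))) (fun k => M (fst (Cantor.of_nat k)) (snd (Cantor.of_nat k))))
     as (A & B & C & D); [intros; apply Hd|intros; apply HdP|].
  assert (A' : forall i k s, 0 <= d i k * delta (E i k) s).
  { intros i k s. specialize (A (Cantor.to_nat (i, k)) s). rewrite Cantor.cancel_of_to in A. exact A. }
  assert (B' : forall i k s, 0 <= d i k * M i k s).
  { intros i k s. specialize (B (Cantor.to_nat (i, k)) s). rewrite Cantor.cancel_of_to in B. exact B. }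
  assert (Hinj : forall a b, Cantor.of_nat a = Cantor.of_nat b -> a = b).
  { intros a b Hab. rewrite <- (Cantor.cancel_to_of a), <- (Cantor.cancel_to_of b), Hab. auto. }
  assert (Hsurj : forall q : nat * nat, exists n, Cantor.of_nat n = q).
  { intros q. exists (Cantor.to_nat q). apply Cantor.cancel_of_to. }
  assert (Hsrc : forall s, tsum (unc (fun i k => d i k * delta (E i k) s)) (nu s)).
  { intros s. apply (fubA (fun i k => d i k * delta (E i k) s) (fun i k => A' i k s) (fun i => p i * nus i s)); auto.
    intros i. apply HH. }
  assert (Hw : tsum (unc d) m).
  { assert (Hcol : forall q : nat * nat, tsum (fun s => unc (fun i k => d i k * delta (E i k) s) q) (unc d q)).
    { intros [i k]. unfold unc; simpl. apply tsum_scal1; auto. apply tsum_delta. }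
    apply (mass_swap (fun q s => unc (fun i k => d i k * delta (E i k) s) q) (unc d) nu m); auto.
    intros [i k] s; apply A'. }
  assert (HM1 : forall i k s, d i k <> 0 -> M i k s <= 1).
  { intros i k s Hne. destruct (HdP i k) as [Z|Z]; [contradiction|]. destruct (HP _ _ Z) as [_ Z2].
    apply (tsum_elem_le (M i k)); auto. }
  assert (Htgt : forall s, exists x, tsum (unc (fun i k => d i k * M i k s)) x).
  { intros s. destruct (tsum_exists (unc (fun i k => d i k * M i k s)) m) as [x [Hx _]]; eauto.
    intros L HL. apply Rle_trans with (gsum (unc d) L).
    - apply gsum_le. intros [i k] _. unfold unc; simpl. destruct (Req_dec (d i k) 0) as [Z|Z].
      + rewrite Z; lra.
      + specialize (HM1 i k s Z). specialize (Hd i k). nra.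
    - eapply tsum_ub; eauto. }
  exists (fun s => tval (unc (fun i k => d i k * M i k s))). split.
  - intros s. pose proof (tval_spec _ (Htgt s)) as H1.
    destruct (fubB (fun i k => d i k * M i k s) (fun i k => B' i k s) _ H1) as [h [Hh1 Hh2]].
    apply tsum_ext with h; auto. intros i. eapply tsum_unique. apply Hh1. apply HH.
  - exists (fun k => d (fst (Cantor.of_nat k)) (snd (Cantor.of_nat k))),
      (fun k => E (fst (Cantor.of_nat k)) (snd (Cantor.of_nat k))), (fun k => M (fst (Cantor.of_nat k)) (snd (Cantor.of_nat k))).
    split; [|split; [|split]].
    + intros; apply Hd.
    + intros; apply HdP.
    + intros s. apply (proj2 (tsum_inj Cantor.of_nat (unc (fun i k => d i k * delta (E i k) s)) (nu s)
        (fun q => A' (fst q) (snd q) s) Hinj (fun q _ => Hsurj q))). apply Hsrc.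
    + intros s. apply (proj2 (tsum_inj Cantor.of_nat (unc (fun i k => d i k * M i k s)) _
        (fun q => B' (fst q) (snd q) s) Hinj (fun q _ => Hsurj q))). apply tval_spec; auto.
Qed.

Lemma gnf_comb_eq (p : nat -> R) (nus mus : nat -> subd Act) nu mu m :
  (forall i, 0 <= p i) -> (forall i, p i = 0 \/ gnf P (nus i) (mus i)) ->
  (forall s, tsum (fun i => p i * nus i s) (nu s)) -> (forall s, tsum (fun i => p i * mus i s) (mu s)) -> tsum nu m ->
  gnf P nu mu.
Proof. intros Hp Hg H1 H2 Hm. destruct (gnf_comb p nus mus nu m Hp Hg H1 Hm) as [mu' [A B]].
  replace mu with mu'; auto. apply functional_extensionality. intros s. eapply tsum_unique; eauto. Qed.
End G.
End Model.

Section M4.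
Context {Act : Type}.

Fixpoint cstep_ind2 (Q : subd Act -> Act -> subd Act -> Prop)
  (Hb : forall E a mu, nstep E a mu -> Q (delta E) a mu)
  (Hc : forall a p nus mus nu mu, weights p -> (forall i, p i = 0 \/ (cstep (nus i) a (mus i) /\ Q (nus i) a (mus i))) ->
        is_wsum p nus nu -> is_wsum p mus mu -> Q nu a mu)
  nu a mu (H : cstep nu a mu) {struct H} : Q nu a mu :=
  match H with
  | @cstep_base _ E a mu Hn => Hb E a mu Hn
  | @cstep_comb _ a p nus mus nu mu Hw Hi Hn Hm =>
      Hc a p nus mus nu mu Hw (fun i => match Hi i with
                                        | or_introl e => or_introl e
                                        | or_intror c => or_intror (conj c (cstep_ind2 Q Hb Hc _ _ _ c)) end) Hn Hm
  end.

Fixpoint lift_ind2 (Rel : nexp Act -> nexp Act -> Prop) (Q : subd Act -> subd Act -> Prop)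
  (Hb : forall E F, Rel E F -> Q (delta E) (delta F))
  (Hc : forall p mus nus mu nu, weights p -> (forall i, p i = 0 \/ (lift Rel (mus i) (nus i) /\ Q (mus i) (nus i))) ->
        is_wsum p mus mu -> is_wsum p nus nu -> Q mu nu)
  mu nu (H : lift Rel mu nu) {struct H} : Q mu nu :=
  match H with
  | @lift_base _ _ E F HR => Hb E F HR
  | @lift_comb _ _ p mus nus mu nu Hw Hi Hn Hm =>
      Hc p mus nus mu nu Hw (fun i => match Hi i with
                                        | or_introl e => or_introl e
                                        | or_intror c => or_intror (conj c (lift_ind2 Rel Q Hb Hc _ _ c)) end) Hn Hm
  end.

Definition Pst (a : Act) : nexp Act -> subd Act -> Prop := fun E M => nstep E a M.
Lemma HPst a : forall E M, Pst a E M -> nn M /\ tsum M 1.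
Proof. intros E M H. eapply nstep_mass; eauto. Qed.
Definition Plift (Rel : nexp Act -> nexp Act -> Prop) : nexp Act -> subd Act -> Prop :=
  fun E M => exists F, Rel E F /\ M = delta F.
Lemma HPlift Rel : forall E M, Plift Rel E M -> nn M /\ tsum M 1.
Proof. intros E M [F [_ ->]]. split. apply delta_nn. apply tsum_delta. Qed.

Lemma wsum_gnf_nn P (HP : forall E M, P E M -> nn M /\ tsum M 1) (p : nat -> R) (nus mus : nat -> subd Act) :
  weights p -> (forall i, p i = 0 \/ (gnf P (nus i) (mus i) /\ subdist (nus i))) ->
  (forall i s, 0 <= p i * nus i s) /\ (forall i s, 0 <= p i * mus i s).
Proof. intros Hw H. split; intros i s; apply term_nn; try apply Hw; destruct (H i) as [Z|[G _]]; auto;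
  right; apply (gnf_nn P HP _ _ G). Qed.

Lemma comb_gnf P (HP : forall E M, P E M -> nn M /\ tsum M 1) (p : nat -> R) (nus mus : nat -> subd Act) nu mu :
  weights p -> (forall i, p i = 0 \/ (gnf P (nus i) (mus i) /\ subdist (nus i))) ->
  is_wsum p nus nu -> is_wsum p mus mu -> gnf P nu mu /\ subdist nu.
Proof. intros Hw H Hn Hm. destruct (wsum_gnf_nn P HP p nus mus Hw H) as [N1 N2].
  pose proof (proj1 (wsum_tsum p nus nu N1) Hn) as Hn0. pose proof (proj1 (wsum_tsum p mus mu N2) Hm) as Hm0. clear Hn Hm. rename Hn0 into Hn. rename Hm0 into Hm.
  assert (Hs : subdist nu). { apply (wsum_subdist p nus nu Hw); auto. intros i; destruct (H i) as [Z|[_ Z]]; auto. }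
  split; auto. destruct (subdist_mass nu Hs) as [m [Hm1 _]].
  apply (gnf_comb_eq P HP p nus mus nu mu m); auto. apply Hw. intros i; destruct (H i) as [Z|[Z _]]; auto.
Qed.

Lemma cstep_gnf (nu : subd Act) a (mu : subd Act) : cstep nu a mu -> gnf (Pst a) nu mu /\ subdist nu.
Proof. revert nu a mu. apply cstep_ind2.
  - intros E a mu H. split. apply gnf_single. apply HPst. exact H. apply subdist_delta.
  - intros a p nus mus nu mu Hw H Hn Hm. apply (comb_gnf (Pst a) (HPst a) p nus mus); auto.
    intros i; destruct (H i) as [Z|[_ Z]]; auto.
Qed.

Lemma gnf_cstep (nu : subd Act) a (mu : subd Act) : gnf (Pst a) nu mu -> subdist nu -> cstep nu a mu.
Proof. intros H Hs. destruct (gnf_weights (Pst a) (HPst a) nu mu H Hs) as (c & E & M & Hw & HP2 & H1 & H2).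
  destruct (gnf_terms (Pst a) (HPst a) c E M (proj1 Hw) HP2) as (A & B & _ & _).
  apply (@cstep_comb _ a c (fun k => delta (E k)) M); auto.
  - intros k. destruct (HP2 k); auto. right. apply cstep_base; auto.
  - apply wsum_tsum; auto.
  - apply wsum_tsum; auto.
Qed.

Lemma lift_gnf (Rel : nexp Act -> nexp Act -> Prop) (nu mu : subd Act) : lift Rel nu mu -> gnf (Plift Rel) nu mu /\ subdist nu.
Proof. revert nu mu. apply lift_ind2.
  - intros E F H. split. apply gnf_single. apply HPlift. exists F; auto. apply subdist_delta.
  - intros p mus nus mu nu Hw H Hn Hm. apply (comb_gnf (Plift Rel) (HPlift Rel) p mus nus); auto.
    intros i; destruct (H i) as [Z|[_ Z]]; auto.
Qed.

Lemma gnf_lift (Rel : nexp Act -> nexp Act -> Prop) (nu mu : subd Act) : gnf (Plift Rel) nu mu -> subdist nu -> lift Rel nu mu.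
Proof. intros H Hs. destruct (gnf_weights (Plift Rel) (HPlift Rel) nu mu H Hs) as (c & E & M & Hw & HP2 & H1 & H2).
  destruct (gnf_terms (Plift Rel) (HPlift Rel) c E M (proj1 Hw) HP2) as (A & B & _ & _).
  apply (@lift_comb _ Rel c (fun k => delta (E k)) M); auto.
  - intros k. destruct (HP2 k) as [Z|[F [HF ->]]]; auto. right. apply lift_base; auto.
  - apply wsum_tsum; auto.
  - apply wsum_tsum; auto.
Qed.

Lemma lift_flip (Rel : nexp Act -> nexp Act -> Prop) (nu mu : subd Act) : lift Rel nu mu -> lift (fun x y => Rel y x) mu nu.
Proof. revert nu mu. apply lift_ind2.
  - intros E F H. apply lift_base; auto.
  - intros p mus nus mu nu Hw H Hn Hm. apply (@lift_comb _ _ p nus mus); auto. intros i; destruct (H i) as [Z|[_ Z]]; auto.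
Qed.

Lemma lift_mono (Rel Rel' : nexp Act -> nexp Act -> Prop) nu mu : (forall x y, Rel x y -> Rel' x y) ->
  lift Rel nu mu -> lift Rel' nu mu.
Proof. intros HR. revert nu mu. apply lift_ind2.
  - intros E F H. apply lift_base; auto.
  - intros p mus nus mu nu Hw H Hn Hm. apply (@lift_comb _ _ p mus nus); auto. intros i; destruct (H i) as [Z|[_ Z]]; auto.
Qed.

Lemma lift_subdist (Rel : nexp Act -> nexp Act -> Prop) (nu mu : subd Act) : lift Rel nu mu -> subdist nu /\ subdist mu.
Proof. intros H. split. apply (lift_gnf _ _ _ H). apply lift_flip in H. apply (lift_gnf _ _ _ H). Qed.

Lemma lift_mass (Rel : nexp Act -> nexp Act -> Prop) (nu mu : subd Act) m : lift Rel nu mu -> (tsum nu m <-> tsum mu m).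
Proof. intros H. destruct (lift_gnf _ _ _ H) as [G _]. split; intros Hm.
  eapply gnf_mass_eq; eauto. apply HPlift. eapply gnf_mass_eq'; eauto. apply HPlift. Qed.

Lemma lift_supp (Rel : nexp Act -> nexp Act -> Prop) (nu mu : subd Act) s : lift Rel nu mu -> nu s <> 0 -> exists F, Rel s F.
Proof. intros H Hs. destruct (lift_gnf _ _ _ H) as [(c & E & M & Hc & HP2 & H1 & H2) _].
  apply NNPP. intros Hn. apply Hs. apply (tsum_unique _ _ _ (H1 s)).
  apply tsum_ext with (fun _ => 0); [|apply tsum_zero].
  intros k; cbv beta. destruct (HP2 k) as [Z|[F [HF _]]]. rewrite Z; ring.
  destruct (classic (s = E k)) as [Heq|Hne]. exfalso; apply Hn; exists F; rewrite Heq; exact HF. rewrite delta_ne; auto. ring.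
Qed.

Lemma lift_split (Rel : nexp Act -> nexp Act -> Prop) (nu mu : subd Act) (r : nexp Act -> R) : lift Rel nu mu -> (forall s, 0 <= r s <= 1) ->
  exists nu1 nu2, (forall s, nu s = nu1 s + nu2 s) /\ lift Rel nu1 (fun s => r s * mu s) /\
    lift Rel nu2 (fun s => (1 - r s) * mu s).
Proof. intros H Hr. apply lift_flip in H. destruct (lift_gnf _ _ _ H) as [G Hs].
  set (rr := fun (i : nat) s => if Nat.eq_dec i 0 then r s else if Nat.eq_dec i 1 then 1 - r s else 0).
  assert (Hrr : forall i s, 0 <= rr i s). { intros i s; unfold rr; destruct Nat.eq_dec; [|destruct Nat.eq_dec]; specialize (Hr s); lra. }
  assert (Hrr1 : forall s, tsum (fun i => rr i s) 1).
  { intros s. replace 1 with (gsum (fun i => rr i s) (0 :: 1 :: nil)%nat) by (unfold gsum, rr; simpl; ring).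
    apply tsum_finite. intros i; apply Hrr. repeat constructor; simpl; intuition lia.
    intros y Hy. unfold rr. destruct Nat.eq_dec; [subst; exfalso; apply Hy; simpl; auto|].
    destruct Nat.eq_dec; [subst; exfalso; apply Hy; simpl; auto|auto]. }
  destruct (gnf_decomp _ (HPlift _) _ _ rr G Hrr Hrr1) as [mus [H1 H2]].
  assert (Hsd : forall i, subdist (fun s => rr i s * mu s)).
  { intros i. apply subdist_dom with mu; auto. intros s. specialize (Hrr i s). apply Rmult_le_pos; auto. apply subdist_nn; auto.
    intros s. pose proof (tsum_elem_le (fun i => rr i s) 1 i (Hrr1 s)). pose proof (subdist_nn mu Hs s).
    simpl in H0. nra. }
  exists (mus 0%nat), (mus 1%nat). split; [|split].
  - intros s. specialize (H2 s). apply (tsum_unique _ _ _ H2).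
    replace (mus 0%nat s + mus 1%nat s) with (gsum (fun i => mus i s) (0 :: 1 :: nil)%nat) by (unfold gsum; simpl; ring).
    apply tsum_finite. intros i. apply (gnf_nn _ (HPlift _) _ _ (H1 i)). repeat constructor; simpl; intuition lia.
    intros y Hy. apply (gnf_zero _ (HPlift _) _ _ (H1 y)). intros s'. unfold rr.
    destruct Nat.eq_dec; [subst; exfalso; apply Hy; simpl; auto|].
    destruct Nat.eq_dec; [subst; exfalso; apply Hy; simpl; auto|ring].
  - apply lift_flip. apply gnf_lift. exact (H1 0%nat). apply (Hsd 0%nat).
  - apply lift_flip. apply gnf_lift. exact (H1 1%nat). apply (Hsd 1%nat).
Qed.

Lemma cstep_subdist (nu : subd Act) a (mu : subd Act) : cstep nu a mu -> subdist nu /\ subdist mu.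
Proof. intros H. destruct (cstep_gnf _ _ _ H) as [G S]. split; auto. eapply gnf_subdist; eauto. apply HPst. Qed.

Lemma cstep_mass (nu : subd Act) a (mu : subd Act) m : cstep nu a mu -> (tsum nu m <-> tsum mu m).
Proof. intros H. destruct (cstep_gnf _ _ _ H) as [G _]. split; intros Hm.
  eapply gnf_mass_eq; eauto. apply HPst. eapply gnf_mass_eq'; eauto. apply HPst. Qed.

Lemma cstep_zero a : cstep (fun _ : nexp Act => 0) a (fun _ => 0).
Proof. apply (@cstep_comb _ a (fun _ => 0) (fun _ => fun _ => 0) (fun _ => fun _ => 0)).
  - split. intros; lra. intros n. induction n; simpl; lra.
  - auto.
  - intros s. apply tsum_nat. intros i; lra. apply tsum_ext with (fun _ => 0). intros; ring. apply tsum_zero.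
  - intros s. apply tsum_nat. intros i; lra. apply tsum_ext with (fun _ => 0). intros; ring. apply tsum_zero.
Qed.

Lemma cstep_ext (nu nu' : subd Act) a (mu mu' : subd Act) : cstep nu a mu -> (forall s, nu s = nu' s) -> (forall s, mu s = mu' s) -> cstep nu' a mu'.
Proof. intros H E1 E2. replace nu' with nu. replace mu' with mu. auto.
  apply functional_extensionality; auto. apply functional_extensionality; auto. Qed.

Lemma cstep_decomp (nu : subd Act) a (mu : subd Act) (r : nat -> nexp Act -> R) : cstep nu a mu -> (forall i s, 0 <= r i s) ->
  (forall s, tsum (fun i => r i s) 1) ->
  exists mus : nat -> subd Act, (forall i, cstep (fun s => r i s * nu s) a (mus i)) /\
     (forall s, tsum (fun i => mus i s) (mu s)).
Proof. intros H Hr Hr1. destruct (cstep_gnf _ _ _ H) as [G Hs].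
  destruct (gnf_decomp _ (HPst a) _ _ r G Hr Hr1) as [mus [H1 H2]]. exists mus. split; auto.
  intros i. apply gnf_cstep; auto. apply subdist_dom with nu; auto.
  intros s. apply Rmult_le_pos; auto. apply subdist_nn; auto.
  intros s. pose proof (tsum_elem_le (fun i => r i s) 1 i (Hr1 s)). pose proof (subdist_nn nu Hs s). simpl in H0. nra.
Qed.

Lemma cstep_scale_up (nu : subd Act) a (th : subd Act) c : cstep (fun s => c * nu s) a th -> c > 0 -> subdist nu -> cstep nu a (fun s => th s / c).
Proof. intros H Hc Hs. destruct (cstep_gnf _ _ _ H) as [G _].
  apply gnf_cstep; auto. pose proof (gnf_scale _ (/ c) _ _ (Rlt_le _ _ (Rinv_0_lt_compat _ Hc)) G) as G'.
  replace nu with (fun s => / c * (c * nu s)). replace (fun s => th s / c) with (fun s => / c * th s). auto.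
  apply functional_extensionality; intros; unfold Rdiv; ring.
  apply functional_extensionality; intros; field; lra.
Qed.

Lemma cstep_comb_nn (p : nat -> R) (nus mus : nat -> subd Act) (nu : subd Act) a :
  (forall i, 0 <= p i) -> (forall i, p i = 0 \/ cstep (nus i) a (mus i)) ->
  (forall s, tsum (fun i => p i * nus i s) (nu s)) -> subdist nu ->
  exists mu, (forall s, tsum (fun i => p i * mus i s) (mu s)) /\ cstep nu a mu.
Proof. intros Hp H Hn Hs. destruct (subdist_mass nu Hs) as [m [Hm _]].
  destruct (gnf_comb (Pst a) (HPst a) p nus mus nu m Hp) as [mu [A B]]; auto.
  intros i; destruct (H i); auto. right. apply cstep_gnf; auto.
  exists mu. split; auto. apply gnf_cstep; auto.
Qed.

End M4.

Section M5.
Context {Act : Type} (tau : Act).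

Definition deriv (mto mx : nat -> subd Act) : Prop :=
  (forall i, subdist (mto i) /\ subdist (mx i)) /\
  (forall i, cstep (mto i) tau (fun s => mto (S i) s + mx (S i) s)).

Lemma weak_tau_iff (rho th : subd Act) : weak_tau tau rho th <->
  exists mto mx, deriv mto mx /\ (forall s, rho s = mto 0%nat s + mx 0%nat s) /\ (forall s, tsum (fun i => mx i s) (th s)).
Proof. split.
  - intros (mto & mx & H1 & H2 & H3 & H4). exists mto, mx. split; [split; auto|split].
    intros s; rewrite H3; auto. intros s. apply tsum_nat; auto. intros i. apply subdist_nn, H1.
  - intros (mto & mx & [H1 H2] & H3 & H4). exists mto, mx. split; auto. split; auto. split.
    apply functional_extensionality; auto. intros s. apply tsum_nat; auto. intros i. apply subdist_nn, H1.
Qed.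

Lemma wt_refl (rho : subd Act) : subdist rho -> weak_tau tau rho rho.
Proof. intros H. apply weak_tau_iff. exists (fun _ _ => 0), (fun i => if Nat.eq_dec i 0 then rho else fun _ => 0).
  split; [split|split].
  - intros i. split. apply subdist_zero. destruct Nat.eq_dec; auto. apply subdist_zero.
  - intros i. simpl. apply cstep_ext with (fun _ => 0) (fun _ => 0). apply cstep_zero. auto. intros; lra.
  - intros s; simpl; lra.
  - intros s. apply (tsum_single_v (fun i => (if Nat.eq_dec i 0 then rho else fun _ => 0) s) 0%nat).
    intros i; destruct Nat.eq_dec; [apply subdist_nn; auto|lra].
    intros i Hi; destruct Nat.eq_dec; [contradiction|auto]. simpl; auto.
Qed.

Lemma deriv_choice (p : nat -> R) (rhos ths : nat -> subd Act) :
  (forall i, p i = 0 \/ weak_tau tau (rhos i) (ths i)) ->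
  exists mto mx : nat -> nat -> subd Act, forall i, deriv (mto i) (mx i) /\
    (p i <> 0 -> (forall s, rhos i s = mto i 0%nat s + mx i 0%nat s) /\ (forall s, tsum (fun t => mx i t s) (ths i s))).
Proof. intros H.
  destruct (choice (fun i (x : (nat -> subd Act) * (nat -> subd Act)) => deriv (fst x) (snd x) /\
    (p i <> 0 -> (forall s, rhos i s = fst x 0%nat s + snd x 0%nat s) /\ (forall s, tsum (fun t => snd x t s) (ths i s)))))
    as [f Hf].
  { intros i. destruct (classic (p i = 0)) as [Z|Z].
    - exists (fun _ _ => 0, fun _ _ => 0). simpl. split; [|tauto]. split. intros; split; apply subdist_zero.
      intros. apply cstep_ext with (fun _ => 0) (fun _ => 0). apply cstep_zero. auto. intros; lra.
    - destruct (H i) as [Z'|W]; [contradiction|]. apply weak_tau_iff in W. destruct W as (mto & mx & A & B & C).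
      exists (mto, mx). simpl. auto. }
  exists (fun i => fst (f i)), (fun i => snd (f i)). auto.
Qed.

Lemma wt_comb (p : nat -> R) (rhos ths : nat -> subd Act) rho th : weights p ->
  (forall i, p i = 0 \/ weak_tau tau (rhos i) (ths i)) ->
  (forall s, tsum (fun i => p i * rhos i s) (rho s)) -> (forall s, tsum (fun i => p i * ths i s) (th s)) ->
  weak_tau tau rho th.
Proof. intros Hw H Hr Ht. destruct (deriv_choice p rhos ths H) as (mto & mx & HD).
  destruct (weights_tsum p Hw) as [Sp [HSp HSp1]].
  assert (Hp : forall i, 0 <= p i) by apply Hw.
  assert (Nto : forall i t s, 0 <= p i * mto i t s). { intros; apply Rmult_le_pos; auto. apply subdist_nn, (proj1 (HD i)). }
  assert (Nx : forall i t s, 0 <= p i * mx i t s). { intros; apply Rmult_le_pos; auto. apply subdist_nn, (proj1 (HD i)). }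
  assert (Ex : forall (f : nat -> nat -> subd Act), (forall i t, subdist (f i t)) -> forall t s, exists x, tsum (fun i => p i * f i t s) x).
  { intros f Hf t s. destruct (tsum_le_ex (fun i => p i * f i t s) p Sp) as [x [Hx _]]; eauto.
    intros i. pose proof (subdist_le1 _ s (Hf i t)). specialize (Hp i). nra.
    intros i. apply Rmult_le_pos; auto. apply subdist_nn, Hf. }
  set (MTO := fun t s => tval (fun i => p i * mto i t s)).
  set (MX := fun t s => tval (fun i => p i * mx i t s)).
  assert (HMTO : forall t s, tsum (fun i => p i * mto i t s) (MTO t s)).
  { intros; apply tval_spec, Ex. intros; apply (proj1 (HD i)). }
  assert (HMX : forall t s, tsum (fun i => p i * mx i t s) (MX t s)).
  { intros; apply tval_spec, Ex. intros; apply (proj1 (HD i)). }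
  apply weak_tau_iff. exists MTO, MX. split; [split|split].
  - intros t. split.
    + apply (wsum_subdist p (fun i => mto i t)); auto. intros i; right; apply (proj1 (HD i)).
    + apply (wsum_subdist p (fun i => mx i t)); auto. intros i; right; apply (proj1 (HD i)).
  - intros t. apply (@cstep_comb _ tau p (fun i => mto i t) (fun i => fun s => mto i (S t) s + mx i (S t) s)); auto.
    + intros i; right. apply (proj2 (proj1 (HD i))).
    + apply wsum_tsum; auto.
    + apply wsum_tsum. intros i s. specialize (Nto i (S t) s). specialize (Nx i (S t) s). nra.
      intros s. apply tsum_ext with (fun i => p i * mto i (S t) s + p i * mx i (S t) s). intros; ring.
      apply tsum_plus; [intros i; apply Nto|intros i; apply Nx|apply HMTO|apply HMX].
  - intros s. apply (tsum_unique _ _ _ (Hr s)).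
    apply tsum_ext with (fun i => p i * mto i 0%nat s + p i * mx i 0%nat s).
    + intros i. destruct (classic (p i = 0)) as [Z|Z]. rewrite Z; ring. rewrite (proj1 (proj2 (HD i) Z) s). ring.
    + apply tsum_plus; [intros i; apply Nto|intros i; apply Nx|apply HMTO|apply HMX].
  - intros s.
    assert (Hrow : forall i, tsum (fun t => p i * mx i t s) (p i * ths i s)).
    { intros i. destruct (classic (p i = 0)) as [Z|Z].
      - rewrite Z. apply tsum_ext with (fun _ => 0). intros; ring. rewrite Rmult_0_l. apply tsum_zero.
      - apply tsum_scal; auto. apply (proj2 (proj2 (HD i) Z)). }
    destruct (fub_swap (fun i t => p i * mx i t s) (fun i => p i * ths i s) (th s) (fun i t => Nx i t s) Hrow (Ht s))
      as [k [Hk1 Hk2]].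
    apply tsum_ext with k; auto. intros t. symmetry. apply tval_eq. apply Hk1.
Qed.

Lemma wa_comb (a : Act) (p : nat -> R) (rhos ths : nat -> subd Act) rho th : weights p ->
  (forall i, p i = 0 \/ weak_act tau (rhos i) a (ths i)) ->
  (forall s, tsum (fun i => p i * rhos i s) (rho s)) -> (forall s, tsum (fun i => p i * ths i s) (th s)) ->
  weak_act tau rho a th.
Proof. intros Hw H Hr Ht.
  destruct (choice (fun i (x : subd Act * subd Act) => p i = 0 \/
     (subdist (fst x) /\ subdist (snd x) /\ weak_tau tau (rhos i) (fst x) /\ cstep (fst x) a (snd x) /\ weak_tau tau (snd x) (ths i))))
    as [f Hf].
  { intros i. destruct (H i) as [Z|(m1 & m2 & A)]. exists (rhos i, rhos i); auto. exists (m1, m2); auto. }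
  destruct (weights_tsum p Hw) as [Sp [HSp HSp1]].
  assert (Hp : forall i, 0 <= p i) by apply Hw.
  assert (Ex : forall (g : nat -> subd Act), (forall i, p i = 0 \/ subdist (g i)) -> forall s, exists x, tsum (fun i => p i * g i s) x).
  { intros g Hg s. destruct (tsum_le_ex (fun i => p i * g i s) p Sp) as [x [Hx _]]; eauto.
    intros i. destruct (Hg i) as [Z|Z]. rewrite Z; lra. pose proof (subdist_le1 _ s Z). specialize (Hp i). nra.
    intros i. apply (term_nn p g i s); auto. destruct (Hg i); auto. right. apply subdist_nn; auto. }
  assert (G1 : forall i, p i = 0 \/ subdist (fst (f i))) by (intros i; destruct (Hf i) as [Z|Z]; [left|right]; tauto).
  assert (G2 : forall i, p i = 0 \/ subdist (snd (f i))) by (intros i; destruct (Hf i) as [Z|Z]; [left|right]; tauto).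
  set (m1 := fun s => tval (fun i => p i * fst (f i) s)).
  set (m2 := fun s => tval (fun i => p i * snd (f i) s)).
  assert (H1 : forall s, tsum (fun i => p i * fst (f i) s) (m1 s)) by (intros; apply tval_spec, Ex; auto).
  assert (H2 : forall s, tsum (fun i => p i * snd (f i) s) (m2 s)) by (intros; apply tval_spec, Ex; auto).
  exists m1, m2. split; [|split; [|split; [|split]]].
  - apply (wsum_subdist p (fun i => fst (f i))); auto.
  - apply (wsum_subdist p (fun i => snd (f i))); auto.
  - apply (wt_comb p rhos (fun i => fst (f i))); auto. intros i; destruct (Hf i) as [Z|Z]; [left|right]; tauto.
  - apply (@cstep_comb _ a p (fun i => fst (f i)) (fun i => snd (f i))); auto.
    + intros i; destruct (Hf i) as [Z|Z]; [left|right]; tauto.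
    + apply wsum_tsum; auto. intros i s. apply (term_nn p (fun i => fst (f i)) i s); auto. destruct (G1 i); auto. right; apply subdist_nn; auto.
    + apply wsum_tsum; auto. intros i s. apply (term_nn p (fun i => snd (f i)) i s); auto. destruct (G2 i); auto. right; apply subdist_nn; auto.
  - apply (wt_comb p (fun i => snd (f i)) ths); auto. intros i; destruct (Hf i) as [Z|Z]; [left|right]; tauto.
Qed.

Lemma wh_comb (a : Act) (p : nat -> R) (rhos ths : nat -> subd Act) rho th : weights p ->
  (forall i, p i = 0 \/ weak_hat tau (rhos i) a (ths i)) ->
  (forall s, tsum (fun i => p i * rhos i s) (rho s)) -> (forall s, tsum (fun i => p i * ths i s) (th s)) ->
  weak_hat tau rho a th.
Proof. intros Hw H Hr Ht. split; intros Ha.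
  - apply (wt_comb p rhos ths); auto. intros i; destruct (H i) as [Z|[Z _]]; auto.
  - apply (wa_comb a p rhos ths); auto. intros i; destruct (H i) as [Z|[_ Z]]; auto.
Qed.

Definition mass (f : subd Act) : R := tval f.
Lemma mass_spec (f : subd Act) : subdist f -> tsum f (mass f) /\ mass f <= 1.
Proof. intros H. destruct (subdist_mass f H) as [m [Hm Hm1]]. unfold mass. rewrite (tval_eq f m Hm). auto. Qed.

Lemma deriv_mass mto mx (rho : subd Act) : deriv mto mx -> (forall s, rho s = mto 0%nat s + mx 0%nat s) ->
  forall N, tsum rho (mass (mto N) + sum_f_R0 (fun t => mass (mx t)) N).
Proof. intros [H1 H2] Hr N. induction N.
  - simpl. apply tsum_ext with (fun s => mto 0%nat s + mx 0%nat s). intros; auto.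
    apply tsum_plus; try apply subdist_nn; try apply mass_spec; apply H1.
  - simpl. replace (mass (mto (S N)) + (sum_f_R0 (fun t => mass (mx t)) N + mass (mx (S N))))
      with (mass (mto N) + sum_f_R0 (fun t => mass (mx t)) N); auto.
    assert (tsum (fun s => mto (S N) s + mx (S N) s) (mass (mto (S N)) + mass (mx (S N)))).
    { apply tsum_plus; try apply subdist_nn; try apply mass_spec; apply H1. }
    apply (cstep_mass _ _ _ _ (H2 N)) in H. pose proof (proj1 (mass_spec _ (proj1 (H1 N)))).
    rewrite (tsum_unique _ _ _ H0 H). ring.
Qed.

Lemma deriv_final_mass mto mx (th : subd Act) : deriv mto mx -> (forall s, tsum (fun i => mx i s) (th s)) ->
  forall m, tsum th m <-> tsum (fun t => mass (mx t)) m.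
Proof. intros [H1 H2] Ht m. symmetry. apply (mass_swap (fun t s => mx t s)); auto.
  intros; apply subdist_nn, H1. intros; apply mass_spec, H1. Qed.

Lemma wt_mass (rho th : subd Act) m : weak_tau tau rho th -> tsum rho m -> exists m', tsum th m' /\ m' <= m.
Proof. intros W Hm. apply weak_tau_iff in W. destruct W as (mto & mx & D & Hr & Ht).
  pose proof (deriv_mass mto mx rho D Hr) as HN.
  assert (Hmx : forall t, 0 <= mass (mx t)). { intros t. apply (tsum_nn (mx t)). apply mass_spec, D. }
  destruct (tsum_nat_partial (fun t => mass (mx t)) m) as [m' [Hm' Hm'1]]; auto.
  { intros N. specialize (HN N). rewrite (tsum_unique _ _ _ Hm HN). pose proof (tsum_nn _ _ (proj1 (mass_spec _ (proj1 (proj1 D N))))). lra. }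
  exists m'. split; auto. apply (deriv_final_mass mto mx th D Ht). auto.
Qed.

Lemma wt_subdist (rho th : subd Act) : weak_tau tau rho th -> subdist rho -> subdist th.
Proof. intros W Hs. destruct (subdist_mass rho Hs) as [m [Hm Hm1]]. destruct (wt_mass rho th m W Hm) as [m' [H1 H2]].
  apply subdist_of_mass with m'; auto. intros s. apply weak_tau_iff in W.
  destruct W as (mto & mx & D & Hr & Ht). apply (tsum_nn _ _ (Ht s)). lra. Qed.

Lemma deriv_conv mto mx (rho th : subd Act) m : deriv mto mx -> (forall s, rho s = mto 0%nat s + mx 0%nat s) ->
  (forall s, tsum (fun i => mx i s) (th s)) -> tsum rho m -> tsum th m ->
  forall e, e > 0 -> exists N, forall n, (n >= N)%nat -> mass (mto n) < e.
Proof. intros D Hr Ht Hm Hth e He.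
  pose proof (proj1 (deriv_final_mass mto mx th D Ht m) Hth) as H.
  assert (Hmx : forall t, 0 <= mass (mx t)). { intros t. apply (tsum_nn (mx t)). apply mass_spec, D. }
  pose proof (tsum_nat_cv _ _ Hmx H) as Hc. destruct (Hc e He) as [N HN]. exists N. intros n Hn.
  specialize (HN n Hn). pose proof (deriv_mass mto mx rho D Hr n) as Hn2. rewrite (tsum_unique _ _ _ Hm Hn2) in HN.
  unfold Rdist in HN. assert (0 <= mass (mto n)) by (apply (tsum_nn (mto n)); apply mass_spec, D).
  rewrite Rabs_left1 in HN; lra.
Qed.

End M5.

Section M6.
Context {Act : Type} (tau : Act).

Definition good (Q : nat -> nexp Act -> R) := (forall u s, 0 <= Q u s) /\ (forall s, tsum (fun u => Q u s) 1).

Lemma good_le1 Q u s : good Q -> Q u s <= 1.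
Proof. intros [_ H]. apply (tsum_elem_le (fun u => Q u s)); auto. Qed.

Lemma good_ind0 : good (fun u _ => if Nat.eq_dec u 0 then 1 else 0).
Proof. split. intros u s; destruct Nat.eq_dec; lra.
  intros s. apply (tsum_single_v _ 0%nat). intros u; destruct Nat.eq_dec; lra.
  intros u Hu; destruct Nat.eq_dec; [contradiction|auto]. simpl; auto. Qed.

Lemma dd_step (nu mu : subd Act) (Q : nat -> nexp Act -> R) : cstep nu tau mu -> good Q ->
  exists Q', good Q' /\ forall u, cstep (fun s => Q u s * nu s) tau (fun s => Q' u s * mu s).
Proof. intros H [HQ1 HQ2].
  destruct (cstep_decomp nu tau mu Q H HQ1 HQ2) as [mus [H1 H2]].
  assert (Hmn : forall u s, 0 <= mus u s). { intros u s. apply subdist_nn. apply (cstep_subdist _ _ _ (H1 u)). }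
  set (Q' := fun u s => if Req_EM_T (mu s) 0 then (if Nat.eq_dec u 0 then 1 else 0) else mus u s / mu s).
  assert (Hmu : forall s, 0 <= mu s). { intros s. apply (tsum_nn _ _ (H2 s)). }
  exists Q'. split; [split|].
  - intros u s. unfold Q'. destruct Req_EM_T. destruct Nat.eq_dec; lra.
    unfold Rdiv. apply Rmult_le_pos; auto. apply Rlt_le, Rinv_0_lt_compat. specialize (Hmu s); lra.
  - intros s. unfold Q'. destruct Req_EM_T as [Z|Z].
    + apply (proj2 good_ind0 s).
    + apply tsum_ext with (fun u => / mu s * mus u s). intros u; unfold Rdiv; ring.
      replace 1 with (/ mu s * mu s) by (field; auto). apply tsum_scal; auto.
      specialize (Hmu s). apply Rlt_le, Rinv_0_lt_compat. lra.
  - intros u. apply cstep_ext with (fun s => Q u s * nu s) (mus u); auto.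
    intros s. unfold Q'. destruct Req_EM_T as [Z|Z].
    + rewrite Z. assert (mus u s <= 0). { rewrite <- Z. apply (tsum_elem_le (fun u => mus u s)); auto. }
      specialize (Hmn u s). lra.
    + field; auto.
Qed.

Lemma deriv_decomp mto mx (q : nat -> nexp Act -> R) : deriv tau mto mx -> good q ->
  exists Rr : nat -> nat -> nexp Act -> R, (forall t, good (fun u => Rr u t)) /\ (forall u s, Rr u 0%nat s = q u s) /\
    (forall u t, cstep (fun s => Rr u t s * mto t s) tau (fun s => Rr u (S t) s * mto (S t) s + Rr u (S t) s * mx (S t) s)).
Proof. intros [D1 D2] Hq.
  destruct (choice (fun (x : nat * (nat -> nexp Act -> R)) (y : nat -> nexp Act -> R) => good (snd x) -> good y /\
     forall u, cstep (fun s => snd x u s * mto (fst x) s) tau (fun s => y u s * (mto (S (fst x)) s + mx (S (fst x)) s))))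
     as [f Hf].
  { intros [t Q]. destruct (classic (good Q)) as [G|G].
    - destruct (dd_step _ _ Q (D2 t) G) as [Q' HQ']. exists Q'. simpl; auto.
    - exists Q. intros; contradiction. }
  set (rec := fix rec (t : nat) : nat -> nexp Act -> R := match t with 0%nat => q | S t' => f (t', rec t') end).
  assert (Hg : forall t, good (rec t)).
  { induction t. simpl; auto. simpl. apply (Hf (t, rec t)). auto. }
  exists (fun u t => rec t u). split; [|split].
  - intros t. apply Hg.
  - intros; reflexivity.
  - intros u t. apply cstep_ext with (fun s => rec t u s * mto t s) (fun s => rec (S t) u s * (mto (S t) s + mx (S t) s)).
    apply (proj2 (Hf (t, rec t) (Hg t)) u). auto. intros; ring.
Qed.
End M6.

Lemma tsum_upto (f : nat -> R) w : (forall u, (u <= w)%nat -> 0 <= f u) ->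
  tsum (fun u => if Compare_dec.le_dec u w then f u else 0) (gsum f (seq 0 (S w))).
Proof. intros H. rewrite (gsum_ext f (fun u => if Compare_dec.le_dec u w then f u else 0)).
  - apply tsum_finite. intros u; destruct Compare_dec.le_dec; auto; lra. apply seq_NoDup.
    intros y Hy. destruct Compare_dec.le_dec; auto. exfalso; apply Hy. apply in_seq; lia.
  - intros u Hu. apply in_seq in Hu. destruct Compare_dec.le_dec; auto. lia.
Qed.

Lemma tsum_of_lim (f : nat -> R) L : nn f ->
  (forall e, e > 0 -> exists N, forall n, (n >= N)%nat -> Rabs (gsum f (seq 0 n) - L) < e) -> tsum f L.
Proof. intros Hf H. apply cv_tsum_nat; auto. intros e He. destruct (H e He) as [N HN]. exists N.
  intros n Hn. unfold Rdist. rewrite sum_gsum. apply HN. lia. Qed.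

Lemma lim_of_tsum (f : nat -> R) L : nn f -> tsum f L ->
  forall e, e > 0 -> exists N, forall n, (n >= N)%nat -> Rabs (gsum f (seq 0 n) - L) < e.
Proof. intros Hf H e He. destruct (tsum_nat_cv f L Hf H e He) as [N HN]. exists (S N). intros n Hn.
  destruct n. lia. rewrite <- sum_gsum. apply HN. lia. Qed.

Lemma partial_le_tsum (f : nat -> R) L n : nn f -> tsum f L -> gsum f (seq 0 n) <= L.
Proof. intros Hf H. apply (tsum_ub f); auto. apply seq_NoDup. Qed.

Lemma tsum_partial_bound (f : nat -> R) B : nn f -> (forall n, gsum f (seq 0 n) <= B) -> exists L, tsum f L /\ L <= B.
Proof. intros Hf H. apply tsum_nat_partial; auto. intros n. rewrite sum_gsum. auto. Qed.

Section Flat.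
Context {Act : Type} (tau : Act).
Variables (rho : subd Act) (a b : nat -> subd Act) (th : subd Act).
Hypothesis Hrho : subdist rho.
Hypothesis Ha0 : forall s, a 0%nat s = rho s.
Hypothesis Ha : forall n s, 0 <= a n s.
Hypothesis Hb : forall n s, 0 <= b n s.
Hypothesis HD : forall n, weak_tau tau (a n) (fun s => a (S n) s + b (S n) s).
Hypothesis Hlim : forall s e, e > 0 -> exists N, forall n, (n >= N)%nat -> a n s < e.
Hypothesis Hth : forall s, tsum (fun n => b (S n) s) (th s).

Lemma lv_ex : exists xs ys : nat -> nat -> subd Act, forall n, deriv tau (xs n) (ys n) /\
   (forall s, a n s = xs n 0%nat s + ys n 0%nat s) /\ (forall s, tsum (fun t => ys n t s) (a (S n) s + b (S n) s)).
Proof. destruct (deriv_choice tau (fun _ => 1) a (fun n s => a (S n) s + b (S n) s)) as (xs & ys & H).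
  intros; right; auto.
  exists xs, ys. intros n. destruct (H n) as [H1 H2]. destruct H2. lra. auto. Qed.

Definition xs := proj1_sig (constructive_indefinite_description _ lv_ex).
Definition ys := proj1_sig (constructive_indefinite_description _ (proj2_sig (constructive_indefinite_description _ lv_ex))).
Lemma Hxy n : deriv tau (xs n) (ys n) /\
   (forall s, a n s = xs n 0%nat s + ys n 0%nat s) /\ (forall s, tsum (fun t => ys n t s) (a (S n) s + b (S n) s)).
Proof. unfold xs, ys. destruct (constructive_indefinite_description _ lv_ex) as [x Hx]. simpl.
  destruct (constructive_indefinite_description _ Hx) as [y Hy]. simpl. auto. Qed.

Lemma xs_nn n t s : 0 <= xs n t s.
Proof. apply subdist_nn. apply (proj1 (proj1 (Hxy n)) t). Qed.
Lemma ys_nn n t s : 0 <= ys n t s.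
Proof. apply subdist_nn. apply (proj1 (proj1 (Hxy n)) t). Qed.

Definition phi n s := if Req_EM_T (a (S n) s + b (S n) s) 0 then 0 else a (S n) s / (a (S n) s + b (S n) s).
Lemma phi_bounds n s : 0 <= phi n s <= 1.
Proof. unfold phi. destruct Req_EM_T. lra. pose proof (Ha (S n) s). pose proof (Hb (S n) s).
  split. apply Rmult_le_pos; auto. apply Rlt_le, Rinv_0_lt_compat; lra.
  apply Rmult_le_reg_r with (a (S n) s + b (S n) s). lra. unfold Rdiv. rewrite Rmult_assoc, Rinv_l; lra. Qed.
Lemma phi_a n s : phi n s * (a (S n) s + b (S n) s) = a (S n) s.
Proof. unfold phi. destruct Req_EM_T as [Z|Z]. pose proof (Ha (S n) s). pose proof (Hb (S n) s). lra. field; auto. Qed.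
Lemma phi_b n s : (1 - phi n s) * (a (S n) s + b (S n) s) = b (S n) s.
Proof. pose proof (phi_a n s). lra. Qed.

Definition ddprops n (Q : nat -> nexp Act -> R) (Rr : nat -> nat -> nexp Act -> R) :=
  (forall t, good (fun u => Rr u t)) /\ (forall u s, Rr u 0%nat s = Q u s) /\
  (forall u t, cstep (fun s => Rr u t s * xs n t s) tau
      (fun s => Rr u (S t) s * xs n (S t) s + Rr u (S t) s * ys n (S t) s)).

Lemma dd_ex : exists f : nat * (nat -> nexp Act -> R) -> (nat -> nat -> nexp Act -> R),
  forall n Q, good Q -> ddprops n Q (f (n, Q)).
Proof. destruct (choice (fun (x : nat * (nat -> nexp Act -> R)) y => good (snd x) -> ddprops (fst x) (snd x) y)) as [f Hf].
  - intros [n Q]. destruct (classic (good Q)) as [G|G].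
    + destruct (deriv_decomp tau (xs n) (ys n) Q (proj1 (Hxy n)) G) as [Rr HR]. exists Rr. intros _. exact HR.
    + exists (fun _ _ _ => 0). intros; contradiction.
  - exists f. intros n Q G. apply (Hf (n, Q)). auto.
Qed.
Definition DDf := proj1_sig (constructive_indefinite_description _ dd_ex).
Lemma DDf_spec n Q : good Q -> ddprops n Q (DDf (n, Q)).
Proof. unfold DDf. destruct constructive_indefinite_description as [f Hf]. simpl. auto. Qed.

Definition nextZ n (Q : nat -> nexp Act -> R) : nat -> nexp Act -> R := fun w s =>
  if Req_EM_T (a (S n) s) 0 then (if Nat.eq_dec w 0 then 1 else 0)
  else gsum (fun u => DDf (n, Q) u (w - u)%nat s * ys n (w - u)%nat s) (seq 0 (S w)) / (a (S n) s + b (S n) s).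

Fixpoint Zs (n : nat) : nat -> nexp Act -> R :=
  match n with 0%nat => fun u _ => if Nat.eq_dec u 0 then 1 else 0 | S n' => nextZ n' (Zs n') end.

Lemma cauchy_level n Rr s : (forall t, good (fun u => Rr u t)) ->
  tsum (fun w => gsum (fun u => Rr u (w - u)%nat s * ys n (w - u)%nat s) (seq 0 (S w))) (a (S n) s + b (S n) s).
Proof. intros HG.
  apply (cauchy (fun u t => Rr u t s * ys n t s)).
  - intros u t. apply Rmult_le_pos. apply (proj1 (HG t)). apply ys_nn.
  - apply (fubA_swap (fun u t => Rr u t s * ys n t s) (fun t => ys n t s)).
    + intros u t. apply Rmult_le_pos. apply (proj1 (HG t)). apply ys_nn.
    + intros t. apply tsum_ext with (fun u => ys n t s * Rr u t s). intros; ring.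
      apply tsum_scal1. apply ys_nn. apply (proj2 (HG t)).
    + apply Hxy.
Qed.

Lemma good_Zs n : good (Zs n).
Proof. induction n.
  - apply good_ind0.
  - simpl. pose proof (DDf_spec n (Zs n) IHn) as [HG _].
    assert (Hg : forall w s, 0 <= gsum (fun u => DDf (n, Zs n) u (w - u)%nat s * ys n (w - u)%nat s) (seq 0 (S w))).
    { intros w s. apply gsum_nn. intros u. apply Rmult_le_pos. apply (proj1 (HG _)). apply ys_nn. }
    split.
    + intros w s. unfold nextZ. destruct Req_EM_T. destruct Nat.eq_dec; lra.
      pose proof (Ha (S n) s). pose proof (Hb (S n) s). unfold Rdiv. apply Rmult_le_pos; auto.
      apply Rlt_le, Rinv_0_lt_compat. lra.
    + intros s. unfold nextZ. destruct Req_EM_T as [Z|Z].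
      * apply (proj2 good_ind0 s).
      * pose proof (Ha (S n) s). pose proof (Hb (S n) s).
        apply tsum_ext with (fun w => / (a (S n) s + b (S n) s) * gsum (fun u => DDf (n, Zs n) u (w - u)%nat s * ys n (w - u)%nat s) (seq 0 (S w))).
        intros; unfold Rdiv; ring.
        replace 1 with (/ (a (S n) s + b (S n) s) * (a (S n) s + b (S n) s)) by (field; lra).
        apply tsum_scal. apply Rlt_le, Rinv_0_lt_compat; lra. apply cauchy_level; auto.
Qed.

Definition RR n := DDf (n, Zs n).
Lemma RR_spec n : ddprops n (Zs n) (RR n).
Proof. apply DDf_spec, good_Zs. Qed.
Lemma RR_nn n u t s : 0 <= RR n u t s.
Proof. apply (proj1 (proj1 (RR_spec n) t)). Qed.
Lemma RR_le1 n u t s : RR n u t s <= 1.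
Proof. apply (good_le1 (fun u => RR n u t)). apply (proj1 (RR_spec n)). Qed.

Definition z n u s := Zs n u s * a n s.
Lemma z1 n u s : z n u s = RR n u 0%nat s * (xs n 0%nat s + ys n 0%nat s).
Proof. unfold z. rewrite (proj1 (proj2 (RR_spec n))). rewrite (proj1 (proj2 (Hxy n))). auto. Qed.
Lemma z2 n w s : z (S n) w s = phi n s * gsum (fun u => RR n u (w - u)%nat s * ys n (w - u)%nat s) (seq 0 (S w)).
Proof. unfold z. change (Zs (S n) w s) with (nextZ n (Zs n) w s). unfold nextZ, phi, RR. pose proof (Ha (S n) s). pose proof (Hb (S n) s).
  destruct (Req_EM_T (a (S n) s) 0) as [Z|Z]; destruct (Req_EM_T (a (S n) s + b (S n) s) 0) as [Z2|Z2].
  - rewrite Z. ring.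
  - rewrite Z. unfold Rdiv. ring.
  - lra.
  - field. auto.
Qed.
Lemma z_bounds n u s : 0 <= z n u s <= a n s.
Proof. unfold z. pose proof (good_Zs n) as G. pose proof (proj1 G u s). pose proof (good_le1 _ u s G).
  pose proof (Ha n s). split. apply Rmult_le_pos; auto. nra. Qed.
Lemma z0 u s : z 0%nat u s = if Nat.eq_dec u 0 then rho s else 0.
Proof. unfold z. simpl. rewrite Ha0. destruct Nat.eq_dec; ring. Qed.
Lemma z_lim u s : forall e, e > 0 -> exists N, forall n, (n >= N)%nat -> z n u s < e.
Proof. intros e He. destruct (Hlim s e He) as [N HN]. exists N. intros n Hn. specialize (HN n Hn).
  pose proof (z_bounds n u s). lra. Qed.

Definition P n w s := gsum (fun u => RR n u (w - u)%nat s * xs n (w - u)%nat s) (seq 0 (S w)).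
Definition Q n w s := gsum (fun u => (1 - phi n s) * (RR n u (w - u)%nat s * ys n (w - u)%nat s)) (seq 0 (S w)).
Definition Tn n w s := gsum (fun u => RR n u (S w - u)%nat s * xs n (S w - u)%nat s +
                                      RR n u (S w - u)%nat s * ys n (S w - u)%nat s) (seq 0 (S w)).

Lemma P_nn n w s : 0 <= P n w s.
Proof. apply gsum_nn. intros u. apply Rmult_le_pos. apply RR_nn. apply xs_nn. Qed.
Lemma Q_nn n w s : 0 <= Q n w s.
Proof. apply gsum_nn. intros u. pose proof (phi_bounds n s). apply Rmult_le_pos. lra. apply Rmult_le_pos. apply RR_nn. apply ys_nn. Qed.
Lemma Tn_nn n w s : 0 <= Tn n w s.
Proof. apply gsum_nn. intros u. pose proof (RR_nn n u (S w - u) s). pose proof (xs_nn n (S w - u) s). pose proof (ys_nn n (S w - u) s). nra. Qed.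

Lemma T0 n s : P n 0 s + Q n 0 s = z n 0%nat s - z (S n) 0%nat s.
Proof. rewrite z1, z2. unfold P, Q. simpl. unfold gsum; simpl. ring. Qed.

Lemma T1 n w s : P n (S w) s + Q n (S w) s = Tn n w s + z n (S w) s - z (S n) (S w) s.
Proof. rewrite z1, z2. unfold P, Q, Tn.
  rewrite (seq_S (S w) 0). rewrite !gsum_app, !gsum_cons, !gsum_nil. cbv beta.
  replace (0 + S w)%nat with (S w) by lia. rewrite Nat.sub_diag. rewrite gsum_scal. rewrite gsum_plus.
  ring.
Qed.

Lemma PS0 N s : gsum (fun n => P n 0 s + Q n 0 s) (seq 0 N) = rho s - z N 0%nat s.
Proof. induction N.
  - simpl. rewrite z0. simpl. unfold gsum; simpl; ring.
  - rewrite seq_S, gsum_app, IHN. simpl (0 + N)%nat. rewrite gsum_cons, gsum_nil, T0. ring.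
Qed.

Lemma PS1 N w s : gsum (fun n => P n (S w) s + Q n (S w) s) (seq 0 N) = gsum (fun n => Tn n w s) (seq 0 N) - z N (S w) s.
Proof. induction N.
  - simpl. rewrite z0. simpl. unfold gsum; simpl; ring.
  - rewrite seq_S, !gsum_app, IHN. simpl (0 + N)%nat. rewrite !gsum_cons, !gsum_nil, T1. ring.
Qed.


Definition X w s := tval (fun n => P n w s).
Definition Y w s := tval (fun n => Q n w s).

Lemma sums_from_partial (B : nexp Act -> R) w s : (forall N, gsum (fun n => P n w s + Q n w s) (seq 0 N) <= B s) ->
  tsum (fun n => P n w s) (X w s) /\ tsum (fun n => Q n w s) (Y w s).
Proof. intros H. split.
  - apply tval_spec. destruct (tsum_partial_bound (fun n => P n w s) (B s)) as [L [HL _]]; eauto.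
    intros n; apply P_nn. intros N. eapply Rle_trans; [|apply (H N)]. apply gsum_le. intros n _. pose proof (Q_nn n w s). lra.
  - apply tval_spec. destruct (tsum_partial_bound (fun n => Q n w s) (B s)) as [L [HL _]]; eauto.
    intros n; apply Q_nn. intros N. eapply Rle_trans; [|apply (H N)]. apply gsum_le. intros n _. pose proof (P_nn n w s). lra.
Qed.

Lemma inv0 s : tsum (fun n => P n 0 s) (X 0 s) /\ tsum (fun n => Q n 0 s) (Y 0 s) /\ X 0%nat s + Y 0%nat s = rho s.
Proof. destruct (sums_from_partial rho 0 s) as [H1 H2].
  { intros N. rewrite PS0. pose proof (z_bounds N 0 s). lra. }
  split; auto. split; auto.
  assert (A : tsum (fun n => P n 0 s + Q n 0 s) (X 0%nat s + Y 0%nat s)).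
  { apply tsum_plus; auto; intros n; [apply P_nn|apply Q_nn]. }
  apply (tsum_unique _ _ _ A). apply tsum_of_lim. intros n. pose proof (P_nn n 0 s); pose proof (Q_nn n 0 s); lra.
  intros e He. destruct (z_lim 0 s e He) as [N HN]. exists N. intros n Hn. rewrite PS0.
  specialize (HN n Hn). pose proof (z_bounds n 0 s). rewrite Rabs_left1; lra.
Qed.

Lemma invS w s (Tw : subd Act) : tsum (fun n => Tn n w s) (Tw s) ->
  tsum (fun n => P n (S w) s) (X (S w) s) /\ tsum (fun n => Q n (S w) s) (Y (S w) s) /\ X (S w) s + Y (S w) s = Tw s.
Proof. intros HT. destruct (sums_from_partial Tw (S w) s) as [H1 H2].
  { intros N. rewrite PS1. pose proof (z_bounds N (S w) s).
    pose proof (partial_le_tsum (fun n => Tn n w s) (Tw s) N (fun n => Tn_nn n w s) HT). lra. }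
  split; auto. split; auto.
  assert (A : tsum (fun n => P n (S w) s + Q n (S w) s) (X (S w) s + Y (S w) s)).
  { apply tsum_plus; auto; intros n; [apply P_nn|apply Q_nn]. }
  apply (tsum_unique _ _ _ A). apply tsum_of_lim. intros n. pose proof (P_nn n (S w) s); pose proof (Q_nn n (S w) s); lra.
  intros e He. destruct (z_lim (S w) s (e/2)) as [N1 HN1]. lra.
  destruct (lim_of_tsum (fun n => Tn n w s) (Tw s) (fun n => Tn_nn n w s) HT (e/2)) as [N2 HN2]. lra.
  exists (Nat.max N1 N2). intros n Hn. rewrite PS1.
  specialize (HN1 n ltac:(lia)). specialize (HN2 n ltac:(lia)). pose proof (z_bounds n (S w) s).
  pose proof (partial_le_tsum (fun n => Tn n w s) (Tw s) n (fun n => Tn_nn n w s) HT).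
  rewrite Rabs_left1 in HN2 by lra. rewrite Rabs_left1; lra.
Qed.

Lemma level_gnf n w : subdist (fun s => P n w s) -> gnf (Pst tau) (fun s => P n w s) (fun s => Tn n w s).
Proof. intros Hs. destruct (subdist_mass _ Hs) as [m [Hm _]].
  apply (gnf_comb_eq (Pst tau) (HPst tau) (fun u => if Compare_dec.le_dec u w then 1 else 0)
    (fun u s => RR n u (w - u)%nat s * xs n (w - u)%nat s)
    (fun u s => RR n u (S w - u)%nat s * xs n (S w - u)%nat s + RR n u (S w - u)%nat s * ys n (S w - u)%nat s) _ _ m).
  - intros u; destruct Compare_dec.le_dec; lra.
  - intros u. destruct Compare_dec.le_dec as [Hu|Hu]; [right|left; auto].
    apply cstep_gnf. replace (S w - u)%nat with (S (w - u)) by lia. apply (proj2 (proj2 (RR_spec n))).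
  - intros s. apply tsum_ext with (fun u => if Compare_dec.le_dec u w then RR n u (w - u)%nat s * xs n (w - u)%nat s else 0).
    intros u; destruct Compare_dec.le_dec; ring.
    apply tsum_upto. intros u _. apply Rmult_le_pos. apply RR_nn. apply xs_nn.
  - intros s. apply tsum_ext with (fun u => if Compare_dec.le_dec u w then RR n u (S w - u)%nat s * xs n (S w - u)%nat s + RR n u (S w - u)%nat s * ys n (S w - u)%nat s else 0).
    intros u; destruct Compare_dec.le_dec; ring.
    apply tsum_upto. intros u _. pose proof (RR_nn n u (S w - u) s). pose proof (xs_nn n (S w - u) s). pose proof (ys_nn n (S w - u) s). nra.
  - auto.
Qed.

Lemma step_w w : (forall s, tsum (fun n => P n w s) (X w s)) -> subdist (X w) ->
  exists Tw : subd Act, (forall s, tsum (fun n => Tn n w s) (Tw s)) /\ cstep (X w) tau Tw.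
Proof. intros HX Hs. destruct (subdist_mass _ Hs) as [m [Hm _]].
  destruct (gnf_comb (Pst tau) (HPst tau) (fun _ => 1) (fun n s => P n w s) (fun n s => Tn n w s) (X w) m) as [Tw [H1 H2]].
  - intros; lra.
  - intros n. right. apply level_gnf. apply subdist_dom with (X w); auto. intros s; apply P_nn.
    intros s. apply (tsum_elem_le (fun n => P n w s)). auto.
  - intros s. apply tsum_ext with (fun n => P n w s). intros; ring. auto.
  - auto.
  - exists Tw. split. intros s. apply tsum_ext with (fun n => 1 * Tn n w s). intros; ring. auto.
    apply gnf_cstep; auto.
Qed.

Lemma inv_all w : (forall s, tsum (fun n => P n w s) (X w s)) /\ (forall s, tsum (fun n => Q n w s) (Y w s)) /\ subdist (X w) /\ subdist (Y w).
Proof. induction w.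
  - split; [intros s; apply inv0|split; [intros s; apply inv0|split]].
    + apply subdist_dom with rho; auto. intros s; apply (tsum_nn _ _ (proj1 (inv0 s))).
      intros s. rewrite <- (proj2 (proj2 (inv0 s))). pose proof (tsum_nn _ _ (proj1 (proj2 (inv0 s)))). lra.
    + apply subdist_dom with rho; auto. intros s; apply (tsum_nn _ _ (proj1 (proj2 (inv0 s)))).
      intros s. rewrite <- (proj2 (proj2 (inv0 s))). pose proof (tsum_nn _ _ (proj1 (inv0 s))). lra.
  - destruct IHw as (H1 & H2 & H3 & H4). destruct (step_w w H1 H3) as [Tw [HT HC]].
    pose proof (proj2 (cstep_subdist _ _ _ HC)) as HTs.
    split; [intros s; apply (invS w s Tw (HT s))|split; [intros s; apply (invS w s Tw (HT s))|split]].
    + apply subdist_dom with Tw; auto. intros s; apply (tsum_nn _ _ (proj1 (invS w s Tw (HT s)))).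
      intros s. rewrite <- (proj2 (proj2 (invS w s Tw (HT s)))). pose proof (tsum_nn _ _ (proj1 (proj2 (invS w s Tw (HT s))))). lra.
    + apply subdist_dom with Tw; auto. intros s; apply (tsum_nn _ _ (proj1 (proj2 (invS w s Tw (HT s))))).
      intros s. rewrite <- (proj2 (proj2 (invS w s Tw (HT s)))). pose proof (tsum_nn _ _ (proj1 (invS w s Tw (HT s)))). lra.
Qed.

Lemma Q_row n s : tsum (fun w => Q n w s) (b (S n) s).
Proof. unfold Q. pose proof (phi_bounds n s) as Hp.
  apply (cauchy (fun u t => (1 - phi n s) * (RR n u t s * ys n t s))).
  - intros u t. apply Rmult_le_pos. lra. apply Rmult_le_pos. apply RR_nn. apply ys_nn.
  - apply (fubA_swap (fun u t => (1 - phi n s) * (RR n u t s * ys n t s)) (fun t => (1 - phi n s) * ys n t s)).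
    + intros u t. apply Rmult_le_pos. lra. apply Rmult_le_pos. apply RR_nn. apply ys_nn.
    + intros t. apply tsum_ext with (fun u => ((1 - phi n s) * ys n t s) * RR n u t s). intros; ring.
      apply tsum_scal1. apply Rmult_le_pos. lra. apply ys_nn. apply (proj2 (proj1 (RR_spec n) t)).
    + rewrite <- phi_b. apply tsum_scal. lra. apply Hxy.
Qed.

Lemma flatten : weak_tau tau rho th.
Proof. apply weak_tau_iff. exists X, Y. split; [split|split].
  - intros i. split; apply inv_all.
  - intros w. destruct (inv_all w) as (H1 & H2 & H3 & H4). destruct (step_w w H1 H3) as [Tw [HT HC]].
    apply cstep_ext with (X w) Tw; auto. intros s. symmetry. apply (invS w s Tw (HT s)).
  - intros s. symmetry. apply inv0.
  - intros s. destruct (fub_swap (fun n w => Q n w s) (fun n => b (S n) s) (th s) (fun n w => Q_nn n w s) (fun n => Q_row n s) (Hth s))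
      as [k [Hk1 Hk2]].
    apply tsum_ext with k; auto. intros w. symmetry. apply tval_eq. apply Hk1.
Qed.

End Flat.

Section M8.
Context {Act : Type} (tau : Act).
Notation W := (wbisim tau).

Lemma wt_trans (rho sg th : subd Act) : subdist rho -> weak_tau tau rho sg -> weak_tau tau sg th -> weak_tau tau rho th.
Proof. intros Hr H1 H2.
  pose proof (wt_subdist tau _ _ H1 Hr) as Hs. pose proof (wt_subdist tau _ _ H2 Hs) as Ht.
  set (a := fun n : nat => match n with 0%nat => rho | 1%nat => sg | _ => fun _ : nexp Act => 0 end).
  set (b := fun n : nat => match n with 2%nat => th | _ => fun _ : nexp Act => 0 end).
  apply (flatten tau rho a b th Hr).
  - intros; reflexivity.
  - intros [|[|n]] s; simpl; try lra; apply subdist_nn; auto.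
  - intros [|[|[|n]]] s; simpl; try lra; apply subdist_nn; auto.
  - intros [|[|n]]; simpl.
    + replace (fun s => sg s + 0) with sg; auto. apply functional_extensionality; intros; ring.
    + replace (fun s => 0 + th s) with th; auto. apply functional_extensionality; intros; ring.
    + replace (fun _ : nexp Act => 0 + 0) with (fun _ : nexp Act => 0). apply wt_refl. apply subdist_zero.
      apply functional_extensionality; intros; ring.
  - intros s e He. exists 2%nat. intros [|[|n]] Hn; try lia. simpl. lra.
  - intros s. apply (tsum_single_v (fun n => b (S n) s) 1%nat).
    + intros [|[|n]]; simpl; try lra. apply subdist_nn; auto.
    + intros [|[|n]] Hn; simpl; try lra. contradiction.
    + reflexivity.
Qed.

Lemma wbisim_closed (E F : nexp Act) : W E F -> closed E /\ closed F.
Proof. intros [Rel [[H _] HR]]. apply H; auto. Qed.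

Lemma sim_base (E F : nexp Act) a mu2 : W E F -> cstep (delta F) a mu2 ->
  exists nu2, weak_hat tau (delta E) a nu2 /\ lift W nu2 mu2.
Proof. intros HW HC. destruct (cstep_gnf _ _ _ HC) as [G Hs].
  destruct (gnf_weights (Pst a) (HPst a) _ _ G Hs) as (c & E' & M & Hw & HP2 & H1 & H2).
  destruct (gnf_terms (Pst a) (HPst a) c E' M (proj1 Hw) HP2) as (A & B & _ & _).
  assert (HE : forall k, c k <> 0 -> E' k = F).
  { intros k Hk. apply NNPP. intros Hne. pose proof (tsum_elem_le _ _ k (H1 (E' k))). cbv beta in H.
    rewrite delta_eq, delta_ne in H; auto. pose proof (proj1 Hw k). lra. }
  assert (Hc1 : tsum c 1).
  { rewrite <- (delta_eq F). apply tsum_ext with (fun k => c k * delta (E' k) F); auto.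
    intros k. destruct (Req_dec (c k) 0) as [Z|Z]. rewrite Z; ring. rewrite HE, delta_eq; auto. ring. }
  destruct HW as [Rel [HB HR]]. pose proof HB as (HB1 & HB2 & HB3).
  destruct (choice (fun k (x : subd Act) => c k = 0 \/ (weak_hat tau (delta E) a x /\ lift W x (M k)))) as [f Hf].
  { intros k. destruct (HP2 k) as [Z|Z]. exists (fun _ => 0); auto.
    destruct (Req_dec (c k) 0) as [Z'|Z']. exists (fun _ => 0); auto.
    rewrite HE in Z; auto. destruct (HB3 E F a (M k) HR Z) as [x [Hx1 Hx2]].
    exists x. right. split; auto. apply lift_mono with Rel; auto. intros p q Hpq. exists Rel; split; auto. }
  assert (Hfs : forall k, c k = 0 \/ subdist (f k)).
  { intros k. destruct (Hf k) as [Z|[_ Z]]; auto. right. apply (lift_subdist _ _ _ Z). }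
  assert (Hex : forall s, exists x, tsum (fun k => c k * f k s) x).
  { intros s. destruct (tsum_le_ex (fun k => c k * f k s) c 1) as [x [Hx _]]; eauto.
    intros k. destruct (Hfs k) as [Z|Z]. rewrite Z; lra. pose proof (subdist_le1 _ s Z). pose proof (proj1 Hw k). nra.
    intros k. apply (term_nn c f k s). apply Hw. destruct (Hfs k); auto. right; apply subdist_nn; auto. }
  exists (fun s => tval (fun k => c k * f k s)). split.
  - apply (wh_comb tau a c (fun _ => delta E) f); auto.
    + intros k. destruct (Hf k) as [Z|[Z _]]; auto.
    + intros s. apply tsum_ext with (fun k => delta E s * c k). intros; ring.
      apply tsum_scal1; auto. apply delta_nn.
    + intros s. apply tval_spec; auto.
  - apply (@lift_comb _ W c f M); auto.
    + intros k. destruct (Hf k) as [Z|[_ Z]]; auto.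
    + apply wsum_tsum. intros k s. apply (term_nn c f k s). apply Hw. destruct (Hfs k); auto. right; apply subdist_nn; auto.
      intros s. apply tval_spec; auto.
    + apply wsum_tsum; auto.
Qed.

Lemma sim_step (nu mu : subd Act) a mu2 : lift W nu mu -> cstep mu a mu2 ->
  exists nu2, weak_hat tau nu a nu2 /\ lift W nu2 mu2.
Proof. intros HL HC. apply lift_flip in HL. destruct (lift_gnf _ _ _ HL) as [G Hs].
  destruct (gnf_weights _ (HPlift _) _ _ G Hs) as (c & F & M & Hw & HP2 & H1 & H2).
  destruct (gnf_terms _ (HPlift _) c F M (proj1 Hw) HP2) as (A & B & _ & _).
  (* mu = sum c_k delta F_k ; nu = sum c_k M_k with M_k = delta E_k *)
  assert (Hmu : forall s, 0 <= mu s) by (intros s; apply (tsum_nn _ _ (H1 s))).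
  set (r := fun k s => if Req_EM_T (mu s) 0 then (if Nat.eq_dec k 0 then 1 else 0) else c k * delta (F k) s / mu s).
  assert (Hr : forall k s, 0 <= r k s).
  { intros k s. unfold r. destruct Req_EM_T. destruct Nat.eq_dec; lra. unfold Rdiv. apply Rmult_le_pos; auto.
    apply Rlt_le, Rinv_0_lt_compat. specialize (Hmu s). lra. }
  assert (Hr1 : forall s, tsum (fun k => r k s) 1).
  { intros s. unfold r. destruct Req_EM_T as [Z|Z]. apply (proj2 (@good_ind0 Act) s).
    apply tsum_ext with (fun k => / mu s * (c k * delta (F k) s)). intros; unfold Rdiv; ring.
    replace 1 with (/ mu s * mu s) by (field; auto). apply tsum_scal; auto. apply Rlt_le, Rinv_0_lt_compat.
    specialize (Hmu s). lra. }
  assert (Hrm : forall k s, r k s * mu s = c k * delta (F k) s).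
  { intros k s. unfold r. destruct Req_EM_T as [Z|Z].
    - rewrite Z. pose proof (tsum_elem_le _ _ k (H1 s)). cbv beta in H. rewrite Z in H. specialize (A k s). lra.
    - field; auto. }
  destruct (cstep_decomp mu a mu2 r HC Hr Hr1) as [ths [Hth1 Hth2]].
  assert (Hth0 : forall k, c k = 0 -> forall s, ths k s = 0).
  { intros k Z. destruct (cstep_gnf _ _ _ (Hth1 k)) as [Gk _]. apply (gnf_zero _ (HPst a) _ _ Gk).
    intros s. rewrite Hrm, Z. ring. }
  destruct (choice (fun k (x : subd Act) => c k = 0 \/ (weak_hat tau (M k) a x /\ lift W x (fun s => ths k s / c k))))
    as [f Hf].
  { intros k. destruct (HP2 k) as [Z|[E [HW HMk]]]. exists (fun _ => 0); auto. rewrite HMk.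
    destruct (Req_dec (c k) 0) as [Z|Z]. exists (fun _ => 0); auto.
    assert (Hck : c k > 0) by (pose proof (proj1 Hw k); lra).
    assert (cstep (delta (F k)) a (fun s => ths k s / c k)).
    { assert (Hx : cstep (fun s => c k * delta (F k) s) a (ths k)).
      { apply cstep_ext with (fun s => r k s * mu s) (ths k); [apply Hth1| intros s; apply Hrm | intros; reflexivity]. }
      apply cstep_scale_up; [exact Hx | exact Hck | apply subdist_delta]. }
    destruct (sim_base E (F k) a _ HW H) as [x [Hx1 Hx2]].
    exists x. right. split; auto. }
  assert (Hfs : forall k, c k = 0 \/ subdist (f k)).
  { intros k. destruct (Hf k) as [Z|[_ Z]]; auto. right. apply (lift_subdist _ _ _ Z). }
  assert (Hthn : forall k s, 0 <= ths k s) by (intros k s; apply subdist_nn; apply (cstep_subdist _ _ _ (Hth1 k))).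
  assert (Hex : forall s, exists x, tsum (fun k => c k * f k s) x).
  { intros s. destruct (weights_tsum c Hw) as [Sc [HSc HSc1]].
    destruct (tsum_le_ex (fun k => c k * f k s) c Sc) as [x [Hx _]]; eauto.
    intros k. destruct (Hfs k) as [Z|Z]. rewrite Z; lra. pose proof (subdist_le1 _ s Z). pose proof (proj1 Hw k). nra.
    intros k. apply (term_nn c f k s). apply Hw. destruct (Hfs k); auto. right; apply subdist_nn; auto. }
  exists (fun s => tval (fun k => c k * f k s)). split.
  - apply (wh_comb tau a c M f); auto.
    + intros k. destruct (Hf k) as [Z|[Z _]]; auto.
    + intros s. apply tval_spec; auto.
  - apply (@lift_comb _ W c f (fun k s => ths k s / c k)); auto.
    + intros k. destruct (Hf k) as [Z|[_ Z]]; auto.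
    + apply wsum_tsum. intros k s. apply (term_nn c f k s). apply Hw. destruct (Hfs k); auto. right; apply subdist_nn; auto.
      intros s. apply tval_spec; auto.
    + assert (Ht : forall k s, c k * (ths k s / c k) = ths k s).
      { intros k s. destruct (Req_dec (c k) 0) as [Z|Z]. rewrite Z, (Hth0 k Z). ring. field; auto. }
      apply wsum_tsum. intros k s. rewrite Ht; auto.
      intros s. apply tsum_ext with (fun k => ths k s). intros k; rewrite Ht; auto. auto.
Qed.

End M8.

Section M9.
Context {Act : Type} (tau : Act).
Notation W := (wbisim tau).

Lemma lift_split2 (A m1 m2 : subd Act) : lift W A (fun s => m1 s + m2 s) -> (forall s, 0 <= m1 s) -> (forall s, 0 <= m2 s) ->
  exists A1 A2, (forall s, A s = A1 s + A2 s) /\ lift W A1 m1 /\ lift W A2 m2.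
Proof. intros H H1 H2.
  set (r := fun s => if Req_EM_T (m1 s + m2 s) 0 then 0 else m1 s / (m1 s + m2 s)).
  assert (Hr : forall s, 0 <= r s <= 1).
  { intros s. unfold r. destruct Req_EM_T. lra. specialize (H1 s). specialize (H2 s). split.
    unfold Rdiv. apply Rmult_le_pos; auto. apply Rlt_le, Rinv_0_lt_compat; lra.
    apply Rmult_le_reg_r with (m1 s + m2 s). lra. unfold Rdiv. rewrite Rmult_assoc, Rinv_l; lra. }
  destruct (lift_split _ _ _ r H Hr) as [A1 [A2 [E [L1 L2]]]].
  exists A1, A2. split; auto. split.
  - replace m1 with (fun s => r s * (m1 s + m2 s)); auto. apply functional_extensionality; intros s. unfold r.
    destruct Req_EM_T as [Z|Z]. specialize (H1 s); specialize (H2 s). lra. field; auto.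
  - replace m2 with (fun s => (1 - r s) * (m1 s + m2 s)); auto. apply functional_extensionality; intros s. unfold r.
    destruct Req_EM_T as [Z|Z]. specialize (H1 s); specialize (H2 s). lra. field; auto.
Qed.

Lemma main_tau (nu mu mu' : subd Act) m : lift W nu mu -> weak_tau tau mu mu' -> tsum mu m -> tsum mu' m ->
  exists nu', weak_tau tau nu nu' /\ lift W nu' mu'.
Proof. intros HL HW Hm Hm'.
  pose proof HW as HW'. apply weak_tau_iff in HW'. destruct HW' as (mto & mx & D & Hr & Ht).
  assert (Hmu : subdist mu) by apply (lift_subdist _ _ _ HL).
  assert (Hm1 : m <= 1). { destruct (subdist_mass _ Hmu) as [m0 [Hm0 Hm01]]. rewrite (tsum_unique _ _ _ Hm Hm0). auto. }
  assert (Hmto : forall t s, 0 <= mto t s) by (intros; apply subdist_nn, (proj1 D)).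
  assert (Hmx : forall t s, 0 <= mx t s) by (intros; apply subdist_nn, (proj1 D)).
  destruct (choice (fun (x : nat * subd Act) (y : subd Act * subd Act) => lift W (snd x) (mto (fst x)) ->
     weak_tau tau (snd x) (fun s => fst y s + snd y s) /\ lift W (fst y) (mto (S (fst x))) /\ lift W (snd y) (mx (S (fst x)))))
    as [f Hf].
  { intros [t A]. simpl. destruct (classic (lift W A (mto t))) as [HA|HA].
    - destruct (sim_step tau A (mto t) tau _ HA (proj2 D t)) as [nu2 [[Hw1 _] Hl]].
      destruct (lift_split2 nu2 (mto (S t)) (mx (S t)) Hl (Hmto _) (Hmx _)) as [A1 [A2 [E [L1 L2]]]].
      exists (A1, A2). intros _. simpl. split; auto.
      replace (fun s => A1 s + A2 s) with nu2; auto. apply functional_extensionality; auto.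
    - exists (A, A). intros; contradiction. }
  assert (HL0 : lift W nu (fun s => mto 0%nat s + mx 0%nat s)).
  { replace (fun s => mto 0%nat s + mx 0%nat s) with mu; auto. apply functional_extensionality; auto. }
  destruct (lift_split2 nu _ _ HL0 (Hmto _) (Hmx _)) as [A0 [B0 [E0 [L01 L02]]]].
  set (AB := fix AB (t : nat) : subd Act * subd Act := match t with 0%nat => (A0, B0) | S t' => f (t', fst (AB t')) end).
  assert (Inv : forall t, lift W (fst (AB t)) (mto t) /\ lift W (snd (AB t)) (mx t)).
  { induction t. simpl; auto. simpl. destruct (Hf (t, fst (AB t))) as (_ & H1 & H2); simpl; auto. apply IHt. }
  assert (Step : forall t, weak_tau tau (fst (AB t)) (fun s => fst (AB (S t)) s + snd (AB (S t)) s)).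
  { intros t. simpl. apply (Hf (t, fst (AB t))). apply Inv. }
  set (Bm := fun t => mass (snd (AB t))).
  assert (HBm : forall t, tsum (snd (AB t)) (mass (mx t))).
  { intros t. apply (lift_mass _ _ _ _ (proj2 (Inv t))). apply mass_spec, (proj1 D). }
  assert (HAm : forall t, tsum (fst (AB t)) (mass (mto t))).
  { intros t. apply (lift_mass _ _ _ _ (proj1 (Inv t))). apply mass_spec, (proj1 D). }
  assert (Hmxn : forall t, 0 <= mass (mx t)) by (intros t; apply (tsum_nn (mx t)); apply mass_spec, (proj1 D)).
  assert (Hsm : tsum (fun t => mass (mx t)) m) by (apply (deriv_final_mass tau mto mx mu' D Ht m); auto).
  assert (HBn : forall t s, 0 <= snd (AB t) s) by (intros t s; apply subdist_nn, (lift_subdist _ _ _ (proj2 (Inv t)))).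
  assert (HAn : forall t s, 0 <= fst (AB t) s) by (intros t s; apply subdist_nn, (lift_subdist _ _ _ (proj1 (Inv t)))).
  assert (Hex : forall s, exists x, tsum (fun n => snd (AB n) s) x).
  { intros s. destruct (tsum_le_ex (fun n => snd (AB n) s) (fun t => mass (mx t)) m) as [x [Hx _]]; eauto.
    intros n. apply (tsum_elem_le (snd (AB n))). auto. intros n; auto. }
  set (th := fun s => tval (fun n => snd (AB n) s)).
  assert (Hth : forall s, tsum (fun n => snd (AB n) s) (th s)) by (intros s; apply tval_spec; auto).
  exists th. split.
  - apply (flatten tau nu (fun n => match n with 0%nat => nu | S n' => fst (AB n') end)
                          (fun n => match n with 0%nat => fun _ => 0 | S n' => snd (AB n') end) th).
    + apply (lift_subdist _ _ _ HL).
    + intros; reflexivity.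
    + intros [|n] s; auto. apply subdist_nn, (lift_subdist _ _ _ HL).
    + intros [|n] s; auto. lra.
    + intros [|n].
      * replace (fun s => fst (AB 0%nat) s + snd (AB 0%nat) s) with nu. apply wt_refl, (lift_subdist _ _ _ HL).
        apply functional_extensionality; intros s; simpl; auto.
      * apply Step.
    + intros s e He. destruct (deriv_conv tau mto mx mu mu' m D Hr Ht Hm Hm' e He) as [N HN].
      exists (S N). intros [|n] Hn. lia. specialize (HN n ltac:(lia)).
      pose proof (tsum_elem_le _ _ s (HAm n)). simpl. lra.
    + auto.
  - assert (Hthm : tsum th m).
    { apply (mass_swap (fun n s => snd (AB n) s) (fun t => mass (mx t)) th m); auto. }
    destruct (gnf_comb (Plift W) (HPlift W) (fun _ => 1) (fun n => snd (AB n)) mx th m) as [mu2 [H1 H2]].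
    + intros; lra.
    + intros n. right. apply lift_gnf, Inv.
    + intros s. apply tsum_ext with (fun n => snd (AB n) s). intros; ring. auto.
    + auto.
    + replace mu' with mu2. apply gnf_lift; auto. apply subdist_of_mass with m; auto. intros s; apply (tsum_nn _ _ (Hth s)).
      apply functional_extensionality; intros s. apply (tsum_unique (fun n => mx n s)).
      apply tsum_ext with (fun n => 1 * mx n s). intros; ring. auto. auto.
Qed.

End M9.

Lemma final_props {Act : Type} (tau : Act) (nu mu : subd Act) : lift (wbisim tau) nu mu -> subdist nu /\ closed_supp nu.
Proof. intros H. split. apply (lift_subdist _ _ _ H). intros s Hs. destruct (lift_supp _ _ _ s H Hs) as [F HF].
  apply (wbisim_closed tau s F HF). Qed.

Theorem mainTheorem14 (Act : Type) (tau : Act)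
  (mu mu' nu : subd Act) (a : Act) :
  subdist mu -> subdist mu' -> subdist nu ->
  closed_supp mu -> closed_supp mu' -> closed_supp nu ->
  lift (wbisim tau) nu mu ->
  weak_hat tau mu a mu' ->
  same_mass mu mu' ->
  exists nu', subdist nu' /\ closed_supp nu' /\
    weak_hat tau nu a nu' /\ lift (wbisim tau) nu' mu'.
Proof.
  intros Hmu Hmu' Hnu _ _ _ HL [HW1 HW2] [r [Hr1 Hr2]].
  assert (Hr : tsum mu r) by exact Hr1. assert (Hr' : tsum mu' r) by exact Hr2.
  destruct (classic (a = tau)) as [Ha|Ha].
  - subst a. destruct (main_tau tau nu mu mu' r HL (HW1 eq_refl) Hr Hr') as [nu' [H1 H2]].
    exists nu'. destruct (final_props tau nu' mu' H2) as [A B]. split; auto. split; auto. split; auto.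
    split; auto. intros C; contradiction.
  - destruct (HW2 Ha) as (mu1 & mu2 & Hs1 & Hs2 & W1 & C & W2).
    destruct (wt_mass tau mu mu1 r W1 Hr) as [m1 [Hm1 Hm1r]].
    pose proof (proj1 (cstep_mass _ _ _ m1 C) Hm1) as Hm2.
    destruct (wt_mass tau mu2 mu' m1 W2 Hm2) as [m2 [Hm2' Hm2r]].
    rewrite (tsum_unique _ _ _ Hm2' Hr') in Hm2r.
    assert (E : m1 = r) by lra. subst m1.
    destruct (main_tau tau nu mu mu1 r HL W1 Hr Hm1) as [nu1 [N1 L1]].
    destruct (sim_step tau nu1 mu1 a mu2 L1 C) as [rho [[_ Wr] Lr]].
    destruct (Wr Ha) as (p1 & p2 & Hp1 & Hp2 & Wp1 & Cp & Wp2).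
    destruct (main_tau tau rho mu2 mu' r Lr W2 Hm2 Hr') as [nu' [N2 L2]].
    exists nu'. destruct (final_props tau nu' mu' L2) as [A B]. split; auto. split; auto. split; auto.
    split. intros Z; contradiction.
    intros _. exists p1, p2. split; auto. split; auto. split; [|split; auto].
    + apply wt_trans with nu1; auto.
    + apply wt_trans with rho; auto.
Qed.
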